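(* The set $\Sigma_0=\{X_0,\ CX_{0,1},\ CCX_{1,2},\ K_{1,2}\}$ of $8\times 8$ matrices is a minimal generating set for $W(E_8)$: it generates $W(E_8)$, and no proper subset of $\Sigma_0$ generates $W(E_8)$.
   Context: Qubits are labelled $0,1,2$; the basis vector $|x_0x_1x_2\rangle$ is identified with $e_{4x_0+2x_1+x_2}\in\mathbb{R}^8$. $X=\begin{bmatrix}0&1\\1&0\end{bmatrix}$, $H=\frac1{\sqrt2}\begin{bmatrix}1&1\\1&-1\end{bmatrix}$, and $M_j$ denotes $M$ acting on qubit $j$ (e.g. $X_0=X\otimes I\otimes I$). $CX_{0,1}$ sends $|x_0x_1x_2\rangle$ to $|x_0,x_1\oplus x_0,x_2\rangle$; $CCX_{1,2}$ sends $|x_0x_1x_2\rangle$ to $|x_0\oplus x_1x_2,x_1,x_2\rangle$; $K_{1,2}=I\otimes H\otimes H$. With $\mathbb{D}=\mathbb{Z}[1/2]$ and $\Gamma_8=\{x\in\mathbb{Z}^8\cup(\mathbb{Z}+\tfrac12)^8:\sum_ix_i\equiv0\pmod2\}$ (the $E_8$ lattice), $W(E_8)$ is the group of $8\times8$ orthogonal matrices $M$ with entries in $\mathbb{D}$ satisfying $M\Gamma_8=\Gamma_8$. *)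

(* Defs.v *)
(* Matrices over rat (dyadic rationals form a subring of Q). *)
From HB Require Import structures.
From mathcomp Require Import all_boot all_order all_algebra.
Set Implicit Arguments. Unset Strict Implicit. Unset Printing Implicit Defensive.
Import Order.TTheory GRing.Theory Num.Theory.
Local Open Scope ring_scope.

Notation mat8 := 'M[rat]_8.

(* basis vector |x0 x1 x2> is e_(4 x0 + 2 x1 + x2); bits of an index j < 8 *)
Definition bit0 (j : nat) : bool := (4 <= j)%N.
Definition bit1 (j : nat) : bool := odd j./2.
Definition bit2 (j : nat) : bool := odd j.

Definition perm8 (f : nat -> nat) : mat8 :=
  \matrix_(i < 8, j < 8) ((i : nat) == f j)%:R.

(* X_0 : flip qubit 0 *)
Definition fX0 (j : nat) : nat := if bit0 j then (j - 4)%N else (j + 4)%N.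
(* CX_{0,1} : x1 := x1 xor x0 *)
Definition fCX01 (j : nat) : nat :=
  if bit0 j then (if bit1 j then (j - 2)%N else (j + 2)%N) else j.
(* CCX_{1,2} : x0 := x0 xor (x1 x2) *)
Definition fCCX12 (j : nat) : nat :=
  if bit1 j && bit2 j then fX0 j else j.

Definition X0 : mat8 := perm8 fX0.
Definition CX01 : mat8 := perm8 fCX01.
Definition CCX12 : mat8 := perm8 fCCX12.
(* K_{1,2} = I (x) H (x) H, H = 1/sqrt2 [[1,1],[1,-1]] *)
Definition K12 : mat8 :=
  \matrix_(i < 8, j < 8)
    (((bit0 i == bit0 j)%:R / 2%:R) *
     (-1) ^+ ((bit1 i && bit1 j) + (bit2 i && bit2 j))%N).

Definition Sigma0 (M : mat8) : Prop :=
  M = X0 \/ M = CX01 \/ M = CCX12 \/ M = K12.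

Definition is_int (q : rat) : Prop := exists z : int, q = z%:~R.
Definition dyadic (q : rat) : Prop :=
  exists (z : int) (k : nat), q = z%:~R / 2%:R ^+ k.

Definition Gamma8 (x : 'cV[rat]_8) : Prop :=
  ((forall i, is_int (x i 0)) \/ (forall i, is_int (x i 0 - 1 / 2%:R))) /\
  is_int ((\sum_i x i 0) / 2%:R).

Definition WE8 (M : mat8) : Prop :=
  M *m M^T = 1%:M /\ (forall i j, dyadic (M i j)) /\
  (forall y, Gamma8 y <-> exists x, Gamma8 x /\ y = M *m x).

Inductive generated (S : mat8 -> Prop) : mat8 -> Prop :=
| gen_one : generated S 1%:M
| gen_in M : S M -> generated S M
| gen_mul M N : generated S M -> generated S N -> generated S (M *m N)
| gen_inv M : generated S M -> generated S (invmx M).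

Definition generates (S : mat8 -> Prop) : Prop :=
  forall M, generated S M <-> WE8 M.

(* Main.v *)
Require Import Defs.
From HB Require Import structures.
From mathcomp Require Import all_boot all_order all_algebra.
From mathcomp Require Import ring lra zify.
From Stdlib Require Import Lia.
Set Implicit Arguments. Unset Strict Implicit. Unset Printing Implicit Defensive.
Import Order.TTheory GRing.Theory Num.Theory.
Local Open Scope ring_scope.

Definition cv (s : seq rat) : 'cV[rat]_8 := \col_(i < 8) s`_i.

Definition aX0 (s : seq rat) := [:: s`_4; s`_5; s`_6; s`_7; s`_0; s`_1; s`_2; s`_3].
Definition aCX (s : seq rat) := [:: s`_0; s`_1; s`_2; s`_3; s`_6; s`_7; s`_4; s`_5].
Definition aCCX (s : seq rat) := [:: s`_0; s`_1; s`_2; s`_7; s`_4; s`_5; s`_6; s`_3].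
Definition aK (s : seq rat) :=
  [:: (s`_0 + s`_1 + s`_2 + s`_3) / 2; (s`_0 - s`_1 + s`_2 - s`_3) / 2;
      (s`_0 + s`_1 - s`_2 - s`_3) / 2; (s`_0 - s`_1 - s`_2 + s`_3) / 2;
      (s`_4 + s`_5 + s`_6 + s`_7) / 2; (s`_4 - s`_5 + s`_6 - s`_7) / 2;
      (s`_4 + s`_5 - s`_6 - s`_7) / 2; (s`_4 - s`_5 - s`_6 + s`_7) / 2].

Ltac expand_mv :=
  apply/colP; case => [[|[|[|[|[|[|[|[|//]]]]]]]] Hi];
  rewrite !mxE !big_ord_recr big_ord0 /= !mxE /=.

Lemma X0E s : X0 *m cv s = cv (aX0 s).
Proof. expand_mv; ring. Qed.
Lemma CXE s : CX01 *m cv s = cv (aCX s).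
Proof. expand_mv; ring. Qed.
Lemma CCXE s : CCX12 *m cv s = cv (aCCX s).
Proof. expand_mv; ring. Qed.
Lemma KE s : K12 *m cv s = cv (aK s).
Proof. expand_mv; ring. Qed.

Definition gmx (g : nat) : mat8 :=
  match g with 0 => X0 | 1 => CX01 | 2 => CCX12 | _ => K12 end.
Definition gact (g : nat) (s : seq rat) : seq rat :=
  match g with 0 => aX0 s | 1 => aCX s | 2 => aCCX s | _ => aK s end.
Fixpoint wmx (w : seq nat) : mat8 :=
  if w is g :: w' then gmx g *m wmx w' else 1%:M.
Fixpoint wact (w : seq nat) (s : seq rat) : seq rat :=
  if w is g :: w' then gact g (wact w' s) else s.

Lemma gmxE g s : gmx g *m cv s = cv (gact g s).
Proof.
case: g => [|[|[|g]]]; [exact: X0E | exact: CXE | exact: CCXE | exact: KE].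
Qed.

Lemma wmxE w s : wmx w *m cv s = cv (wact w s).
Proof. elim: w => [|g w IH] /=; first by rewrite mul1mx. by rewrite -mulmxA IH gmxE. Qed.

Lemma gmx_in g : Sigma0 (gmx g).
Proof. rewrite /Sigma0; case: g => [|[|[|g]]] /=; tauto. Qed.

Lemma wmx_gen w : generated Sigma0 (wmx w).
Proof.
elim: w => [|g w IH] /=; first exact: gen_one.
apply: gen_mul => //; apply: gen_in; exact: gmx_in.
Qed.

Definition dot (s t : seq rat) : rat :=
  s`_0 * t`_0 + s`_1 * t`_1 + s`_2 * t`_2 + s`_3 * t`_3 +
  s`_4 * t`_4 + s`_5 * t`_5 + s`_6 * t`_6 + s`_7 * t`_7.
Definition sum8 (s : seq rat) : rat :=
  s`_0 + s`_1 + s`_2 + s`_3 + s`_4 + s`_5 + s`_6 + s`_7.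

Definition ip (u v : 'cV[rat]_8) : rat := (u^T *m v) 0 0.

Lemma ip_cv s t : ip (cv s) (cv t) = dot s t.
Proof. by rewrite /ip !mxE !big_ord_recr big_ord0 /= !mxE /= add0r. Qed.

Lemma ip_orth (M : mat8) u v : M^T *m M = 1%:M -> ip (M *m u) (M *m v) = ip u v.
Proof. by move=> H; rewrite /ip trmx_mul -mulmxA (mulmxA M^T) H mul1mx. Qed.

Definition vof (u : 'cV[rat]_8) : seq rat := mkseq (fun i => u (inord i) 0) 8.
Lemma vofK u : cv (vof u) = u.
Proof.
apply/colP => i; rewrite mxE /vof nth_mkseq //; by rewrite inord_val.
Qed.

Definition ej (j : nat) : seq rat := mkseq (fun k => (k == j)%:R) 8.

Lemma cv_ej (j : 'I_8) : cv (ej j) = delta_mx j 0.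
Proof. by apply/colP => i; rewrite !mxE /ej nth_mkseq // eqxx andbT. Qed.

Lemma mx_eq_cols (A B : mat8) :
  (forall j : 'I_8, A *m cv (ej j) = B *m cv (ej j)) -> A = B.
Proof.
move=> H; apply/matrixP => i j.
have := congr1 (fun M : 'cV_8 => M i 0) (H j).
by rewrite cv_ej -!colE !mxE.
Qed.

Definition isint (q : rat) : bool := denq q == 1.
Lemma isintP q : reflect (is_int q) (isint q).
Proof. exact: ratArchimedean.intrP. Qed.

Definition G8 (t : seq rat) : Prop :=
  ((forall i, (i < 8)%N -> is_int t`_i) \/
   (forall i, (i < 8)%N -> is_int (t`_i - 1 / 2%:R))) /\ is_int (sum8 t / 2%:R).

Lemma sum_cv t : \sum_i (cv t) i 0 = sum8 t.
Proof. by rewrite !big_ord_recr big_ord0 /= !mxE /= add0r. Qed.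

Lemma Gamma8_cv t : Gamma8 (cv t) <-> G8 t.
Proof.
rewrite /Gamma8 /G8 sum_cv; split => -[H1 H2]; split => //.
- case: H1 => H; [left|right] => i Hi; have := H (Ordinal Hi); by rewrite mxE.
- case: H1 => H; [left|right] => i; have := H i (ltn_ord i); by rewrite mxE.
Qed.

Definition G8b (t : seq rat) : bool :=
  (all (fun i => isint t`_i) (iota 0 8) ||
   all (fun i => isint (t`_i - 1 / 2%:R)) (iota 0 8)) && isint (sum8 t / 2%:R).

Lemma G8bP t : G8b t -> G8 t.
Proof.
case/andP => /orP H /isintP H2; split => //.
case: H => /allP H; [left|right] => i Hi; apply/isintP; apply: H;
  by rewrite mem_iota.
Qed.

Fixpoint allv (n : nat) (l : seq rat) : seq (seq rat) :=
  if n is n'.+1 then [seq x :: t | x <- l, t <- allv n' l] else [:: [::]].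

Lemma allv_mem n l s : size s = n -> all (mem l) s -> s \in allv n l.
Proof.
elim: n s => [|n IH] [|x s] //= [Hs] /andP [Hx Hall].
by apply: allpairs_f => //; apply: IH.
Qed.

Definition U8 : seq (seq rat) :=
  allv 8 [:: -1; 0; 1] ++ allv 8 [:: -(1 / 2%:R); 1 / 2%:R].
Definition roots240 : seq (seq rat) :=
  [seq s <- U8 | (dot s s == 2%:R) && isint (sum8 s / 2%:R)].

Lemma sq_le_dot (s : seq rat) i : (i < 8)%N -> s`_i * s`_i <= dot s s.
Proof.
rewrite /dot => Hi.
have h0 := sqr_ge0 s`_0; have h1 := sqr_ge0 s`_1; have h2 := sqr_ge0 s`_2;
have h3 := sqr_ge0 s`_3; have h4 := sqr_ge0 s`_4; have h5 := sqr_ge0 s`_5;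
have h6 := sqr_ge0 s`_6; have h7 := sqr_ge0 s`_7.
rewrite !expr2 in h0 h1 h2 h3 h4 h5 h6 h7.
case: i Hi => [|[|[|[|[|[|[|[|//]]]]]]]] _ /=;
move: h0 h1 h2 h3 h4 h5 h6 h7;
move: (s`_0 * s`_0) (s`_1 * s`_1) (s`_2 * s`_2) (s`_3 * s`_3) (s`_4 * s`_4)
  (s`_5 * s`_5) (s`_6 * s`_6) (s`_7 * s`_7) => a0 a1 a2 a3 a4 a5 a6 a7; lra.
Qed.

Lemma int_sq_le2 (z : int) : (z%:~R : rat) * z%:~R <= 2%:R ->
  (z%:~R : rat) \in [:: -1; 0; 1].
Proof.
rewrite -intrM -[2%:R]/((2%:Z)%:~R) ler_int => H.
have : (z == -1) || (z == 0) || (z == 1) by nia.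
by case/orP => [/orP [] |] /eqP ->; rewrite !inE ?eqxx ?orbT.
Qed.

Lemma half_sq_le2 (z : int) : ((z%:~R : rat) + 1 / 2%:R) * (z%:~R + 1 / 2%:R) <= 2%:R ->
  (z%:~R : rat) + 1 / 2%:R \in [:: -(1 / 2%:R); 1 / 2%:R].
Proof.
move=> H.
have H1 : ((z * z + z)%:~R : rat) < (2%:Z)%:~R.
  rewrite intrD intrM /= -pmulrn; lra.
rewrite ltr_int in H1.
have : (z == -1) || (z == 0) by nia.
by case/orP => /eqP ->; vm_compute.
Qed.

Lemma root_lemma v : Gamma8 v -> ip v v = 2%:R -> exists2 s, s \in roots240 & v = cv s.
Proof.
rewrite -(vofK v) Gamma8_cv ip_cv; set s := vof v => -[H1 H2] Hd.
exists s => //.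
have Hsz : size s = 8 by rewrite size_mkseq.
rewrite mem_filter Hd eqxx /=; apply/andP; split; first exact/isintP.
rewrite mem_cat; apply/orP; case: H1 => H; [left|right]; apply: allv_mem => //;
  apply/(all_nthP 0) => i; rewrite Hsz => Hi; have := sq_le_dot s Hi; rewrite Hd.
- have [z ->] := H i Hi; exact: int_sq_le2.
- have [z Hz] := H i Hi; have -> : s`_i = z%:~R + 1 / 2%:R by rewrite -Hz addrNK.
  exact: half_sq_le2.
Qed.

Lemma dyadic_int (z : int) : dyadic z%:~R.
Proof. by exists z, 0%N; rewrite expr0 divr1. Qed.

Lemma dyadic_nat (n : nat) : dyadic n%:R.
Proof. rewrite pmulrn; exact: dyadic_int. Qed.

Lemma two_neq0 k : (2%:R : rat) ^+ k != 0.
Proof. by rewrite expf_neq0 // pnatr_eq0. Qed.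

Lemma dyadicD a b : dyadic a -> dyadic b -> dyadic (a + b).
Proof.
move=> [za [ka ->]] [zb [kb ->]].
exists (za * 2 ^+ kb + zb * 2 ^+ ka), (ka + kb)%N.
rewrite intrD !intrM !rmorphXn /= -pmulrn exprD.
by field; rewrite !two_neq0.
Qed.

Lemma dyadicM a b : dyadic a -> dyadic b -> dyadic (a * b).
Proof.
move=> [za [ka ->]] [zb [kb ->]].
exists (za * zb), (ka + kb)%N.
rewrite !intrM exprD.
by field; rewrite !two_neq0.
Qed.

Lemma dyadic_sum (F : 'I_8 -> rat) : (forall i, dyadic (F i)) -> dyadic (\sum_i F i).
Proof.
move=> H; apply: (big_ind dyadic) => //; first exact: (dyadic_int 0).
exact: dyadicD.
Qed.

Lemma invmx_orth (M : mat8) : M *m M^T = 1%:M -> invmx M = M^T.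
Proof.
move=> H; have [Hu _] := mulmx1_unit H.
by rewrite -[invmx M]mulmx1 -H mulmxA mulVmx // mul1mx.
Qed.

Lemma WE8_1 : WE8 1%:M.
Proof.
split; first by rewrite trmx1 mul1mx.
split; first by move=> i j; rewrite mxE; exact: dyadic_nat.
move=> y; split => [H|[x [Hx ->]]]; last by rewrite mul1mx.
by exists y; rewrite mul1mx.
Qed.

Lemma WE8_mul A B : WE8 A -> WE8 B -> WE8 (A *m B).
Proof.
move=> [HA [DA LA]] [HB [DB LB]].
split; first by rewrite trmx_mul mulmxA -(mulmxA A) HB mulmx1 HA.
split.
  move=> i j; rewrite mxE; apply: dyadic_sum => k; exact: dyadicM.
move=> y; split.
- move/LA => [x' [Hx' ->]]; have [x [Hx ->]] := (LB x').1 Hx'.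
  by exists x; rewrite mulmxA.
- move=> [x [Hx ->]]; rewrite -mulmxA; apply/LA; exists (B *m x); split => //.
  by apply/LB; exists x.
Qed.

Lemma WE8_inv A : WE8 A -> WE8 (invmx A).
Proof.
move=> [HA [DA LA]]; have HA' := mulmx1C HA.
rewrite invmx_orth //.
split; first by rewrite trmxK.
split; first by move=> i j; rewrite mxE.
move=> y; split.
- move=> Hy; exists (A *m y); split; first by apply/LA; exists y.
  by rewrite mulmxA HA' mul1mx.
- move=> [x [Hx ->]]; have [x'' [Hx'' ->]] := (LA x).1 Hx.
  by rewrite mulmxA HA' mul1mx.
Qed.

Lemma WE8_of (M : mat8) (act : seq rat -> seq rat) :
  (forall s, M *m cv s = cv (act s)) ->
  M^T = M -> M *m M = 1%:M -> (forall i j, dyadic (M i j)) ->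
  (forall s, G8 s -> G8 (act s)) -> WE8 M.
Proof.
move=> HE HT HI HD HG.
have inv x : Gamma8 x -> Gamma8 (M *m x).
  by rewrite -(vofK x) HE !Gamma8_cv; exact: HG.
split; first by rewrite HT.
split => // y; split.
- by move=> Hy; exists (M *m y); split; [exact: inv | rewrite mulmxA HI mul1mx].
- by move=> [x [Hx ->]]; exact: inv.
Qed.

Lemma G8_perm s t : (forall i, (i < 8)%N -> exists2 j, (j < 8)%N & t`_i = s`_j) ->
  sum8 t = sum8 s -> G8 s -> G8 t.
Proof.
move=> Ht Hs [[H|H] Hc]; split; rewrite ?Hs //.
- by left => i Hi; have [j Hj ->] := Ht i Hi; exact: H.
- by right => i Hi; have [j Hj ->] := Ht i Hi; exact: H.
Qed.

Ltac perm_tac :=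
  apply: G8_perm; [ case => [|[|[|[|[|[|[|[|//]]]]]]]] _;
    (eexists; last reflexivity); done
  | rewrite /sum8 /=; ring ].

Lemma aX0_G8 s : G8 s -> G8 (aX0 s). Proof. perm_tac. Qed.
Lemma aCX_G8 s : G8 s -> G8 (aCX s). Proof. perm_tac. Qed.
Lemma aCCX_G8 s : G8 s -> G8 (aCCX s). Proof. perm_tac. Qed.

Lemma par (t : int) : exists q, (t = 2 * q \/ t = 2 * q + 1)%R.
Proof. exists (t %/ 2)%Z; lia. Qed.

Lemma aK_G8 s : G8 s -> G8 (aK s).
Proof.
case=> [[H|H] [c Hc]]; rewrite /sum8 in Hc.
- have [z0 e0] := H 0%N isT; have [z1 e1] := H 1%N isT;
  have [z2 e2] := H 2%N isT; have [z3 e3] := H 3%N isT;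
  have [z4 e4] := H 4%N isT; have [z5 e5] := H 5%N isT;
  have [z6 e6] := H 6%N isT; have [z7 e7] := H 7%N isT.
  rewrite e0 e1 e2 e3 e4 e5 e6 e7 in Hc.
  rewrite /G8 /aK /sum8 /= e0 e1 e2 e3 e4 e5 e6 e7.
  have [q [Hq|Hq]] := par (z0 + z1 + z2 + z3).
  + have Hq' : (z0%:~R + z1%:~R + z2%:~R + z3%:~R : rat) = 2%:R * q%:~R
      by rewrite -!intrD Hq intrM -pmulrn.
    split; last by exists (z0 + z4); rewrite intrD; lra.
    left; case => [|[|[|[|[|[|[|[|//]]]]]]]] _ /=;
    [exists q | exists (q - z1 - z3) | exists (q - z2 - z3) | exists (q - z1 - z2)
    | exists (c - q) | exists (c - q - z5 - z7) | exists (c - q - z6 - z7)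
    | exists (c - q - z5 - z6)]; rewrite ?intrD ?intrN; lra.
  + have Hq' : (z0%:~R + z1%:~R + z2%:~R + z3%:~R : rat) = 2%:R * q%:~R + 1
      by rewrite -!intrD Hq intrD intrM -pmulrn.
    split; last by exists (z0 + z4); rewrite intrD; lra.
    right; case => [|[|[|[|[|[|[|[|//]]]]]]]] _ /=;
    [exists q | exists (q - z1 - z3) | exists (q - z2 - z3) | exists (q - z1 - z2)
    | exists (c - q - 1) | exists (c - q - 1 - z5 - z7) | exists (c - q - 1 - z6 - z7)
    | exists (c - q - 1 - z5 - z6)]; rewrite ?intrD ?intrN; lra.
- have [z0 e0] := H 0%N isT; have [z1 e1] := H 1%N isT;
  have [z2 e2] := H 2%N isT; have [z3 e3] := H 3%N isT;
  have [z4 e4] := H 4%N isT; have [z5 e5] := H 5%N isT;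
  have [z6 e6] := H 6%N isT; have [z7 e7] := H 7%N isT.
  have f0 : s`_0 = z0%:~R + 1 / 2%:R by rewrite -e0 addrNK.
  have f1 : s`_1 = z1%:~R + 1 / 2%:R by rewrite -e1 addrNK.
  have f2 : s`_2 = z2%:~R + 1 / 2%:R by rewrite -e2 addrNK.
  have f3 : s`_3 = z3%:~R + 1 / 2%:R by rewrite -e3 addrNK.
  have f4 : s`_4 = z4%:~R + 1 / 2%:R by rewrite -e4 addrNK.
  have f5 : s`_5 = z5%:~R + 1 / 2%:R by rewrite -e5 addrNK.
  have f6 : s`_6 = z6%:~R + 1 / 2%:R by rewrite -e6 addrNK.
  have f7 : s`_7 = z7%:~R + 1 / 2%:R by rewrite -e7 addrNK.
  rewrite f0 f1 f2 f3 f4 f5 f6 f7 in Hc.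
  rewrite /G8 /aK /sum8 /= f0 f1 f2 f3 f4 f5 f6 f7.
  have [q [Hq|Hq]] := par (z0 + z1 + z2 + z3).
  + have Hq' : (z0%:~R + z1%:~R + z2%:~R + z3%:~R : rat) = 2%:R * q%:~R
      by rewrite -!intrD Hq intrM -pmulrn.
    split; last by exists (z0 + z4 + 1); rewrite !intrD; lra.
    left; case => [|[|[|[|[|[|[|[|//]]]]]]]] _ /=;
    [exists (q + 1) | exists (q - z1 - z3) | exists (q - z2 - z3) | exists (q - z1 - z2)
    | exists (c - 2 - q + 1) | exists (c - 2 - q - z5 - z7) | exists (c - 2 - q - z6 - z7)
    | exists (c - 2 - q - z5 - z6)]; rewrite ?intrD ?intrN; lra.
  + have Hq' : (z0%:~R + z1%:~R + z2%:~R + z3%:~R : rat) = 2%:R * q%:~R + 1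
      by rewrite -!intrD Hq intrD intrM -pmulrn.
    split; last by exists (z0 + z4 + 1); rewrite !intrD; lra.
    right; case => [|[|[|[|[|[|[|[|//]]]]]]]] _ /=;
    [exists (q + 1) | exists (q - z1 - z3) | exists (q - z2 - z3) | exists (q - z1 - z2)
    | exists (c - 2 - q - 1 + 1) | exists (c - 2 - q - 1 - z5 - z7)
    | exists (c - 2 - q - 1 - z6 - z7) | exists (c - 2 - q - 1 - z5 - z6)];
    rewrite ?intrD ?intrN; lra.
Qed.

Definition h : rat := 1 / 2%:R.
Definition mh : rat := - h.

Definition chainL : seq (seq rat) := [:: [:: h; mh; mh; mh; mh; mh; mh; h];
  [:: 1; 1; 0; 0; 0; 0; 0; 0];
  [:: -1; 1; 0; 0; 0; 0; 0; 0];
  [:: 0; -1; 1; 0; 0; 0; 0; 0];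
  [:: 0; 0; -1; 1; 0; 0; 0; 0];
  [:: 0; 0; 0; -1; 1; 0; 0; 0];
  [:: 0; 0; 0; 0; -1; 1; 0; 0];
  [:: 0; 0; 0; 0; 0; -1; 1; 0]].

Definition coefL : seq (seq rat) := [:: [:: 0; h; mh; 0; 0; 0; 0; 0];
  [:: 0; h; h; 0; 0; 0; 0; 0];
  [:: 0; h; h; 1; 0; 0; 0; 0];
  [:: 0; h; h; 1; 1; 0; 0; 0];
  [:: 0; h; h; 1; 1; 1; 0; 0];
  [:: 0; h; h; 1; 1; 1; 1; 0];
  [:: 0; h; h; 1; 1; 1; 1; 1];
  [:: 2%:R; (5%:R / 2%:R); (7%:R / 2%:R); 5%:R; 4%:R; 3%:R; 2%:R; 1]].

Definition T0 : seq (seq rat * seq nat) := [::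
  ([:: h; mh; mh; mh; mh; mh; mh; h], [::]);
  ([:: mh; mh; mh; mh; mh; mh; mh; mh], [:: 0; 1; 3; 2; 1; 2; 3; 0; 2; 0; 3; 2; 1; 2; 3; 1; 0]);
  ([:: mh; mh; mh; mh; mh; mh; h; h], [:: 0; 1; 3; 2; 1; 0; 1; 2; 3; 2; 3; 2; 1; 0; 1; 2; 3; 1; 0]);
  ([:: mh; mh; mh; mh; mh; h; mh; h], [:: 1; 0; 1; 2; 3; 2; 1; 2; 1; 2; 3; 2; 1; 0; 1]);
  ([:: mh; mh; mh; mh; h; mh; mh; h], [:: 1; 0; 1; 3; 2; 1; 0; 1; 2; 3; 2; 3; 2; 1; 0; 1; 2; 3; 1; 0; 1]);
  ([:: mh; mh; mh; h; mh; mh; mh; h], [:: 2; 0; 1; 2; 3; 2; 1; 2; 1; 2; 3; 2; 1; 0; 2]);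
  ([:: mh; mh; h; mh; mh; mh; mh; h], [:: 3; 2; 3; 2; 0; 1; 2; 3; 0; 2; 0; 3; 2; 1; 0; 2; 3; 2; 3]);
  ([:: mh; h; mh; mh; mh; mh; mh; h], [:: 0; 1; 3; 2; 1; 2; 1; 2; 3; 1; 0]);
  ([:: h; h; h; mh; mh; mh; mh; h], [:: 3; 2; 0; 1; 2; 3; 2; 1; 2; 1; 2; 3; 2; 1; 0; 2; 3]);
  ([:: h; h; mh; h; mh; mh; mh; h], [:: 2; 3; 1; 3; 0; 1; 2; 1; 0; 3; 1; 3; 2]);
  ([:: h; h; mh; mh; h; mh; mh; h], [:: 1; 0; 1; 3; 2; 0; 1; 2; 3; 0; 2; 0; 3; 2; 1; 0; 2; 3; 1; 0; 1]);
  ([:: h; h; mh; mh; mh; h; mh; h], [:: 1; 3; 1; 3; 0; 1; 2; 1; 0; 3; 1; 3; 1]);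
  ([:: h; h; mh; mh; mh; mh; h; h], [:: 0; 1; 3; 2; 0; 1; 2; 3; 0; 2; 0; 3; 2; 1; 0; 2; 3; 1; 0]);
  ([:: h; h; mh; mh; mh; mh; mh; mh], [:: 0; 1; 2; 1; 0]);
  ([:: h; mh; h; h; mh; mh; mh; h], [:: 2; 3; 2; 0; 1; 2; 3; 0; 2; 0; 3; 2; 1; 0; 2; 3; 2]);
  ([:: h; mh; h; mh; h; mh; mh; h], [:: 1; 3; 1; 2; 1; 0; 1; 2; 3; 0; 2; 0; 3; 2; 1; 0; 1; 2; 1; 3; 1]);
  ([:: h; mh; h; mh; mh; h; mh; h], [:: 1; 3; 2; 0; 1; 2; 3; 0; 2; 0; 3; 2; 1; 0; 2; 3; 1]);
  ([:: h; mh; h; mh; mh; mh; h; h], [:: 3; 1; 2; 1; 0; 1; 2; 3; 0; 2; 0; 3; 2; 1; 0; 1; 2; 1; 3]);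
  ([:: h; mh; h; mh; mh; mh; mh; mh], [:: 2; 3; 2; 0; 1; 2; 1; 0; 2; 3; 2]);
  ([:: h; mh; mh; h; h; mh; mh; h], [:: 1; 3; 2; 1; 2; 3; 0; 2; 0; 3; 2; 1; 2; 3; 1]);
  ([:: h; mh; mh; h; mh; h; mh; h], [:: 1; 3; 1; 3; 0; 2; 0; 3; 1; 3; 1]);
  ([:: h; mh; mh; h; mh; mh; h; h], [:: 3; 2; 1; 2; 3; 0; 2; 0; 3; 2; 1; 2; 3]);
  ([:: h; mh; mh; h; mh; mh; mh; mh], [:: 0; 2; 0]);
  ([:: h; mh; mh; mh; h; h; mh; h], [:: 1; 2; 3; 2; 1; 2; 3; 0; 2; 0; 3; 2; 1; 2; 3; 2; 1]);
  ([:: h; mh; mh; mh; h; mh; h; h], [:: 3; 1; 2; 3; 2; 1; 2; 3; 0; 2; 0; 3; 2; 1; 2; 3; 2; 1; 3]);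
  ([:: h; mh; mh; mh; h; mh; mh; mh], [:: 2; 1; 2; 3; 2; 1; 2; 1; 2; 3; 2; 1; 2]);
  ([:: h; mh; mh; mh; mh; h; h; h], [:: 3; 2; 1; 2; 3; 2; 1; 2; 1; 2; 3; 2; 1; 2; 3]);
  ([:: h; mh; mh; mh; mh; h; mh; mh], [:: 2; 1; 2; 1; 2]);
  ([:: h; mh; mh; mh; mh; mh; h; mh], [:: 3; 2; 1; 2; 1; 2; 3]);
  ([:: 1; 0; 0; 0; 0; 0; 0; 1], [:: 3; 1; 3; 2; 1; 0; 1; 3; 1; 2; 3; 0; 2; 0; 3; 2; 1; 3; 1; 0; 1; 2; 3; 1; 3]);
  ([:: 1; 0; 0; 0; 0; 0; -1; 0], [:: 2; 1; 0; 1; 3; 1; 2; 3; 0; 2; 0; 3; 2; 1; 3; 1; 0; 1; 2]);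
  ([:: 1; 0; 0; 0; 0; -1; 0; 0], [:: 3; 1; 0; 1; 3; 2; 1; 2; 3; 0; 2; 0; 3; 2; 1; 2; 3; 1; 0; 1; 3]);
  ([:: 1; 0; 0; 0; -1; 0; 0; 0], [:: 3; 0; 1; 2; 3; 2; 1; 2; 1; 2; 3; 2; 1; 0; 3]);
  ([:: 1; 0; 0; -1; 0; 0; 0; 0], [:: 1; 3; 1; 0; 1; 3; 1; 2; 3; 0; 2; 0; 3; 2; 1; 3; 1; 0; 1; 3; 1]);
  ([:: 0; -1; -1; 0; 0; 0; 0; 0], [:: 1; 0; 1; 2; 3; 1; 0; 1; 0; 2; 0; 1; 0; 1; 3; 2; 1; 0; 1]);
  ([:: 1; 0; -1; 0; 0; 0; 0; 0], [:: 1; 0; 1; 3; 0; 1; 2; 3; 0; 2; 0; 3; 2; 1; 0; 3; 1; 0; 1]);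
  ([:: 0; -1; 0; -1; 0; 0; 0; 0], [:: 3; 1; 2; 3; 1; 0; 1; 2; 1; 0; 1; 3; 2; 1; 3]);
  ([:: 0; -1; 0; 0; -1; 0; 0; 0], [:: 2; 0; 1; 2; 3; 0; 2; 0; 3; 2; 1; 0; 2]);
  ([:: 0; -1; 0; 0; 0; -1; 0; 0], [:: 3; 1; 2; 3; 2; 0; 1; 2; 1; 0; 2; 3; 2; 1; 3]);
  ([:: 0; -1; 0; 0; 0; 0; -1; 0], [:: 2; 1; 0; 1; 2; 3; 0; 2; 0; 3; 2; 1; 0; 1; 2]);
  ([:: 0; -1; 0; 0; 0; 0; 0; 1], [:: 3; 1; 3; 2; 1; 0; 1; 2; 3; 0; 2; 0; 3; 2; 1; 0; 1; 2; 3; 1; 3]);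
  ([:: 1; -1; 0; 0; 0; 0; 0; 0], [:: 1; 3; 1; 3; 2; 1; 3; 0; 1; 2; 1; 0; 3; 1; 2; 3; 1; 3; 1]);
  ([:: 0; 0; -1; -1; 0; 0; 0; 0], [:: 1; 2; 3; 1; 0; 1; 2; 1; 0; 1; 3; 2; 1]);
  ([:: 0; 0; -1; 0; -1; 0; 0; 0], [:: 1; 3; 0; 1; 2; 1; 0; 3; 1]);
  ([:: 0; 0; -1; 0; 0; -1; 0; 0], [:: 3; 1; 0; 1; 2; 1; 0; 1; 3]);
  ([:: 0; 0; -1; 0; 0; 0; -1; 0], [:: 2; 1; 2; 1; 3; 0; 1; 2; 1; 0; 3; 1; 2; 1; 2]);
  ([:: 0; 0; -1; 0; 0; 0; 0; 1], [:: 3; 1; 0; 1; 2; 3; 2; 0; 1; 0; 2; 0; 1; 0; 2; 3; 2; 1; 0; 1; 3]);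
  ([:: 0; 0; 0; -1; -1; 0; 0; 0], [:: 1; 3; 0; 2; 0; 3; 1]);
  ([:: 0; 0; 0; -1; 0; -1; 0; 0], [:: 3; 1; 0; 2; 0; 1; 3]);
  ([:: 0; 0; 0; -1; 0; 0; -1; 0], [:: 3; 2; 3; 2; 1; 0; 2; 0; 1; 2; 3; 2; 3]);
  ([:: 0; 0; 0; -1; 0; 0; 0; 1], [:: 2; 1; 3; 1; 2; 3; 2; 3; 2; 1; 3; 1; 2]);
  ([:: 0; 0; 0; 0; -1; -1; 0; 0], [:: 1; 2; 3; 0; 2; 0; 3; 2; 1]);
  ([:: 0; 0; 0; 0; -1; 0; -1; 0], [:: 2; 0; 1; 3; 0; 1; 2; 1; 0; 3; 1; 0; 2]);
  ([:: 0; 0; 0; 0; -1; 0; 0; 1], [:: 1; 3; 2; 3; 1; 3; 1; 3; 2; 3; 1; 3; 1; 3; 2; 3; 1]);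
  ([:: 0; 0; 0; 0; 0; -1; -1; 0], [:: 2; 3; 0; 2; 0; 3; 2]);
  ([:: 0; 0; 0; 0; 0; -1; 0; 1], [:: 3; 1; 2; 3; 2; 3; 2; 1; 3]);
  ([:: 0; 0; 0; 0; 0; 0; -1; 1], [:: 3; 2; 3; 1; 3; 1; 3; 2; 3; 1; 3; 1; 3; 2; 3]);
  ([:: mh; h; h; h; h; h; h; mh], [:: 1; 3; 1; 2; 3; 2; 3; 2; 1; 3; 1]);
  ([:: mh; h; h; mh; mh; mh; mh; mh], [:: 3; 2; 0; 1; 2; 3; 2; 1; 2; 1; 2; 3; 2; 1; 0; 2; 3; 0; 1; 3; 2; 1; 2; 3; 0; 2; 0; 3; 2; 1; 2; 3; 1; 0]);
  ([:: mh; h; mh; h; mh; mh; mh; mh], [:: 2; 3; 1; 3; 0; 1; 2; 1; 0; 3; 1; 3; 2; 0; 1; 3; 2; 1; 2; 3; 0; 2; 0; 3; 2; 1; 2; 3; 1; 0]);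
  ([:: mh; h; mh; mh; h; mh; mh; mh], [:: 1; 0; 1; 3; 2; 0; 1; 2; 3; 0; 2; 0; 3; 2; 1; 0; 2; 3; 1; 0; 1; 0; 1; 3; 2; 1; 2; 3; 0; 2; 0; 3; 2; 1; 2; 3; 1; 0]);
  ([:: mh; h; mh; mh; mh; h; mh; mh], [:: 1; 3; 1; 3; 0; 1; 2; 1; 0; 3; 1; 3; 1; 0; 1; 3; 2; 1; 2; 3; 0; 2; 0; 3; 2; 1; 2; 3; 1; 0]);
  ([:: mh; h; mh; mh; mh; mh; h; mh], [:: 0; 1; 3; 2; 0; 1; 2; 3; 0; 2; 0; 3; 2; 1; 0; 1; 2; 3; 0; 2; 0; 3; 2; 1; 2; 3; 1; 0]);
  ([:: mh; mh; h; h; mh; mh; mh; mh], [:: 2; 3; 2; 0; 1; 2; 3; 0; 2; 0; 3; 2; 1; 0; 2; 3; 2; 0; 1; 3; 2; 1; 2; 3; 0; 2; 0; 3; 2; 1; 2; 3; 1; 0]);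
  ([:: mh; mh; h; mh; h; mh; mh; mh], [:: 1; 3; 1; 2; 1; 0; 1; 2; 3; 0; 2; 0; 3; 2; 1; 0; 1; 2; 1; 3; 1; 0; 1; 3; 2; 1; 2; 3; 0; 2; 0; 3; 2; 1; 2; 3; 1; 0]);
  ([:: mh; mh; h; mh; mh; h; mh; mh], [:: 1; 3; 2; 0; 1; 2; 3; 0; 2; 0; 3; 2; 1; 0; 2; 3; 1; 0; 1; 3; 2; 1; 2; 3; 0; 2; 0; 3; 2; 1; 2; 3; 1; 0]);
  ([:: mh; mh; h; mh; mh; mh; h; mh], [:: 3; 1; 2; 1; 0; 1; 2; 3; 0; 2; 0; 3; 2; 1; 0; 1; 2; 1; 3; 0; 1; 3; 2; 1; 2; 3; 0; 2; 0; 3; 2; 1; 2; 3; 1; 0]);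
  ([:: mh; mh; mh; h; h; mh; mh; mh], [:: 1; 3; 2; 1; 2; 3; 0; 2; 0; 3; 2; 1; 2; 3; 1; 0; 1; 3; 2; 1; 2; 3; 0; 2; 0; 3; 2; 1; 2; 3; 1; 0]);
  ([:: mh; mh; mh; h; mh; h; mh; mh], [:: 1; 3; 1; 3; 0; 2; 0; 3; 1; 3; 1; 0; 1; 3; 2; 1; 2; 3; 0; 2; 0; 3; 2; 1; 2; 3; 1; 0]);
  ([:: mh; mh; mh; h; mh; mh; h; mh], [:: 3; 2; 1; 2; 3; 0; 2; 0; 3; 2; 1; 2; 3; 0; 1; 3; 2; 1; 2; 3; 0; 2; 0; 3; 2; 1; 2; 3; 1; 0]);
  ([:: mh; mh; mh; mh; h; h; mh; mh], [:: 1; 2; 3; 2; 1; 2; 3; 0; 2; 0; 3; 2; 1; 2; 3; 2; 1; 0; 1; 3; 2; 1; 2; 3; 0; 2; 0; 3; 2; 1; 2; 3; 1; 0]);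
  ([:: mh; mh; mh; mh; h; mh; h; mh], [:: 3; 1; 2; 3; 2; 1; 2; 3; 0; 2; 0; 3; 2; 1; 2; 3; 2; 1; 3; 0; 1; 3; 2; 1; 2; 3; 0; 2; 0; 3; 2; 1; 2; 3; 1; 0]);
  ([:: mh; mh; mh; mh; mh; h; h; mh], [:: 3; 2; 1; 2; 3; 2; 1; 2; 1; 2; 3; 2; 1; 2; 3; 0; 1; 3; 2; 1; 2; 3; 0; 2; 0; 3; 2; 1; 2; 3; 1; 0]);
  ([:: h; h; h; h; h; h; h; h], [:: 3; 1; 3; 2; 1; 0; 1; 3; 1; 2; 3; 0; 2; 0; 3; 2; 1; 3; 1; 0; 1; 2; 3; 1; 3; 0; 1; 3; 2; 1; 2; 3; 0; 2; 0; 3; 2; 1; 2; 3; 1; 0]);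
  ([:: 0; 0; 0; 0; 0; 0; -1; -1], [:: 2; 1; 0; 1; 3; 1; 2; 3; 0; 2; 0; 3; 2; 1; 3; 1; 0; 1; 2; 0; 1; 3; 2; 1; 2; 3; 0; 2; 0; 3; 2; 1; 2; 3; 1; 0]);
  ([:: 0; 0; 0; 0; 0; -1; 0; -1], [:: 3; 1; 0; 1; 3; 2; 1; 2; 3; 0; 2; 0; 3; 2; 1; 2; 3; 1; 0; 1; 3; 0; 1; 3; 2; 1; 2; 3; 0; 2; 0; 3; 2; 1; 2; 3; 1; 0]);
  ([:: 0; 0; 0; 0; -1; 0; 0; -1], [:: 3; 0; 1; 2; 3; 2; 1; 2; 1; 2; 3; 2; 1; 0; 3; 0; 1; 3; 2; 1; 2; 3; 0; 2; 0; 3; 2; 1; 2; 3; 1; 0]);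
  ([:: 0; 0; 0; -1; 0; 0; 0; -1], [:: 1; 3; 1; 0; 1; 3; 1; 2; 3; 0; 2; 0; 3; 2; 1; 3; 1; 0; 1; 3; 1; 0; 1; 3; 2; 1; 2; 3; 0; 2; 0; 3; 2; 1; 2; 3; 1; 0]);
  ([:: 0; 0; -1; 0; 0; 0; 0; -1], [:: 1; 0; 1; 3; 0; 1; 2; 3; 0; 2; 0; 3; 2; 1; 0; 3; 1; 0; 1; 0; 1; 3; 2; 1; 2; 3; 0; 2; 0; 3; 2; 1; 2; 3; 1; 0]);
  ([:: -1; -1; 0; 0; 0; 0; 0; 0], [:: 3; 1; 3; 2; 1; 0; 1; 2; 3; 0; 2; 0; 3; 2; 1; 0; 1; 2; 3; 1; 3; 0; 1; 3; 2; 1; 2; 3; 0; 2; 0; 3; 2; 1; 2; 3; 1; 0]);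
  ([:: 0; -1; 0; 0; 0; 0; 0; -1], [:: 1; 3; 1; 3; 2; 1; 3; 0; 1; 2; 1; 0; 3; 1; 2; 3; 1; 3; 1; 0; 1; 3; 2; 1; 2; 3; 0; 2; 0; 3; 2; 1; 2; 3; 1; 0]);
  ([:: -1; 0; -1; 0; 0; 0; 0; 0], [:: 3; 1; 0; 1; 2; 3; 2; 0; 1; 0; 2; 0; 1; 0; 2; 3; 2; 1; 0; 1; 3; 0; 1; 3; 2; 1; 2; 3; 0; 2; 0; 3; 2; 1; 2; 3; 1; 0]);
  ([:: -1; 0; 0; -1; 0; 0; 0; 0], [:: 2; 1; 3; 1; 2; 3; 2; 3; 2; 1; 3; 1; 2; 0; 1; 3; 2; 1; 2; 3; 0; 2; 0; 3; 2; 1; 2; 3; 1; 0]);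
  ([:: -1; 0; 0; 0; -1; 0; 0; 0], [:: 1; 3; 2; 3; 1; 3; 1; 3; 2; 3; 1; 3; 1; 3; 2; 3; 1; 0; 1; 3; 2; 1; 2; 3; 0; 2; 0; 3; 2; 1; 2; 3; 1; 0]);
  ([:: -1; 0; 0; 0; 0; -1; 0; 0], [:: 3; 1; 2; 3; 2; 3; 2; 1; 3; 0; 1; 3; 2; 1; 2; 3; 0; 2; 0; 3; 2; 1; 2; 3; 1; 0]);
  ([:: -1; 0; 0; 0; 0; 0; -1; 0], [:: 3; 2; 3; 1; 3; 1; 3; 2; 3; 1; 3; 1; 3; 2; 3; 0; 1; 3; 2; 1; 2; 3; 0; 2; 0; 3; 2; 1; 2; 3; 1; 0]);
  ([:: -1; 0; 0; 0; 0; 0; 0; -1], [:: 1; 3; 1; 2; 3; 2; 3; 2; 1; 3; 1; 0; 1; 3; 2; 1; 2; 3; 0; 2; 0; 3; 2; 1; 2; 3; 1; 0]);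
  ([:: mh; h; h; mh; mh; mh; h; h], [:: 3; 2; 0; 1; 2; 3; 2; 1; 2; 1; 2; 3; 2; 1; 0; 2; 3; 0; 1; 3; 2; 1; 0; 1; 2; 3; 2; 3; 2; 1; 0; 1; 2; 3; 1; 0]);
  ([:: mh; h; mh; h; mh; mh; h; h], [:: 2; 3; 1; 3; 0; 1; 2; 1; 0; 3; 1; 3; 2; 0; 1; 3; 2; 1; 0; 1; 2; 3; 2; 3; 2; 1; 0; 1; 2; 3; 1; 0]);
  ([:: mh; h; mh; mh; h; mh; h; h], [:: 1; 0; 1; 3; 2; 0; 1; 2; 3; 0; 2; 0; 3; 2; 1; 0; 2; 3; 1; 0; 1; 0; 1; 3; 2; 1; 0; 1; 2; 3; 2; 3; 2; 1; 0; 1; 2; 3; 1; 0]);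
  ([:: mh; h; mh; mh; mh; h; h; h], [:: 1; 3; 1; 3; 0; 1; 2; 1; 0; 3; 1; 3; 1; 0; 1; 3; 2; 1; 0; 1; 2; 3; 2; 3; 2; 1; 0; 1; 2; 3; 1; 0]);
  ([:: mh; mh; h; h; mh; mh; h; h], [:: 2; 3; 2; 0; 1; 2; 3; 0; 2; 0; 3; 2; 1; 0; 2; 3; 2; 0; 1; 3; 2; 1; 0; 1; 2; 3; 2; 3; 2; 1; 0; 1; 2; 3; 1; 0]);
  ([:: mh; mh; h; mh; h; mh; h; h], [:: 1; 3; 1; 2; 1; 0; 1; 2; 3; 0; 2; 0; 3; 2; 1; 0; 1; 2; 1; 3; 1; 0; 1; 3; 2; 1; 0; 1; 2; 3; 2; 3; 2; 1; 0; 1; 2; 3; 1; 0]);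
  ([:: mh; mh; h; mh; mh; h; h; h], [:: 1; 3; 2; 0; 1; 2; 3; 0; 2; 0; 3; 2; 1; 0; 2; 3; 1; 0; 1; 3; 2; 1; 0; 1; 2; 3; 2; 3; 2; 1; 0; 1; 2; 3; 1; 0]);
  ([:: mh; mh; mh; h; h; mh; h; h], [:: 1; 3; 2; 1; 2; 3; 0; 2; 0; 3; 2; 1; 2; 3; 1; 0; 1; 3; 2; 1; 0; 1; 2; 3; 2; 3; 2; 1; 0; 1; 2; 3; 1; 0]);
  ([:: mh; mh; mh; h; mh; h; h; h], [:: 1; 3; 1; 3; 0; 2; 0; 3; 1; 3; 1; 0; 1; 3; 2; 1; 0; 1; 2; 3; 2; 3; 2; 1; 0; 1; 2; 3; 1; 0]);
  ([:: mh; mh; mh; mh; h; h; h; h], [:: 1; 2; 3; 2; 1; 2; 3; 0; 2; 0; 3; 2; 1; 2; 3; 2; 1; 0; 1; 3; 2; 1; 0; 1; 2; 3; 2; 3; 2; 1; 0; 1; 2; 3; 1; 0]);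
  ([:: 0; 0; 0; 0; 0; 0; 1; 1], [:: 3; 1; 3; 2; 1; 0; 1; 3; 1; 2; 3; 0; 2; 0; 3; 2; 1; 3; 1; 0; 1; 2; 3; 1; 3; 0; 1; 3; 2; 1; 0; 1; 2; 3; 2; 3; 2; 1; 0; 1; 2; 3; 1; 0]);
  ([:: h; h; h; h; h; h; mh; mh], [:: 2; 1; 0; 1; 3; 1; 2; 3; 0; 2; 0; 3; 2; 1; 3; 1; 0; 1; 2; 0; 1; 3; 2; 1; 0; 1; 2; 3; 2; 3; 2; 1; 0; 1; 2; 3; 1; 0]);
  ([:: 0; 0; 0; 0; 0; -1; 1; 0], [:: 3; 1; 0; 1; 3; 2; 1; 2; 3; 0; 2; 0; 3; 2; 1; 2; 3; 1; 0; 1; 3; 0; 1; 3; 2; 1; 0; 1; 2; 3; 2; 3; 2; 1; 0; 1; 2; 3; 1; 0]);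
  ([:: 0; 0; 0; 0; -1; 0; 1; 0], [:: 3; 0; 1; 2; 3; 2; 1; 2; 1; 2; 3; 2; 1; 0; 3; 0; 1; 3; 2; 1; 0; 1; 2; 3; 2; 3; 2; 1; 0; 1; 2; 3; 1; 0]);
  ([:: 0; 0; 0; -1; 0; 0; 1; 0], [:: 1; 3; 1; 0; 1; 3; 1; 2; 3; 0; 2; 0; 3; 2; 1; 3; 1; 0; 1; 3; 1; 0; 1; 3; 2; 1; 0; 1; 2; 3; 2; 3; 2; 1; 0; 1; 2; 3; 1; 0]);
  ([:: 0; 0; -1; 0; 0; 0; 1; 0], [:: 1; 0; 1; 3; 0; 1; 2; 3; 0; 2; 0; 3; 2; 1; 0; 3; 1; 0; 1; 0; 1; 3; 2; 1; 0; 1; 2; 3; 2; 3; 2; 1; 0; 1; 2; 3; 1; 0]);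
  ([:: 0; -1; 0; 0; 0; 0; 1; 0], [:: 1; 3; 1; 3; 2; 1; 3; 0; 1; 2; 1; 0; 3; 1; 2; 3; 1; 3; 1; 0; 1; 3; 2; 1; 0; 1; 2; 3; 2; 3; 2; 1; 0; 1; 2; 3; 1; 0]);
  ([:: -1; 0; 0; 0; 0; 0; 0; 1], [:: 3; 2; 3; 1; 3; 1; 3; 2; 3; 1; 3; 1; 3; 2; 3; 0; 1; 3; 2; 1; 0; 1; 2; 3; 2; 3; 2; 1; 0; 1; 2; 3; 1; 0]);
  ([:: -1; 0; 0; 0; 0; 0; 1; 0], [:: 1; 3; 1; 2; 3; 2; 3; 2; 1; 3; 1; 0; 1; 3; 2; 1; 0; 1; 2; 3; 2; 3; 2; 1; 0; 1; 2; 3; 1; 0]);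
  ([:: mh; h; h; mh; mh; h; mh; h], [:: 3; 2; 0; 1; 2; 3; 2; 1; 2; 1; 2; 3; 2; 1; 0; 2; 3; 1; 0; 1; 2; 3; 2; 1; 2; 1; 2; 3; 2; 1; 0; 1]);
  ([:: mh; h; mh; h; mh; h; mh; h], [:: 2; 3; 1; 3; 0; 1; 2; 1; 0; 3; 1; 3; 2; 1; 0; 1; 2; 3; 2; 1; 2; 1; 2; 3; 2; 1; 0; 1]);
  ([:: mh; h; mh; mh; h; h; mh; h], [:: 1; 0; 1; 3; 2; 0; 1; 2; 3; 0; 2; 0; 3; 2; 1; 0; 2; 3; 2; 3; 2; 1; 2; 1; 2; 3; 2; 1; 0; 1]);
  ([:: mh; mh; h; h; mh; h; mh; h], [:: 2; 3; 2; 0; 1; 2; 3; 0; 2; 0; 3; 2; 1; 0; 2; 3; 2; 1; 0; 1; 2; 3; 2; 1; 2; 1; 2; 3; 2; 1; 0; 1]);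
  ([:: mh; mh; h; mh; h; h; mh; h], [:: 1; 3; 1; 2; 1; 0; 1; 2; 3; 0; 2; 0; 3; 2; 1; 0; 1; 2; 1; 3; 0; 1; 2; 3; 2; 1; 2; 1; 2; 3; 2; 1; 0; 1]);
  ([:: mh; mh; mh; h; h; h; mh; h], [:: 1; 3; 2; 1; 2; 3; 0; 2; 0; 3; 2; 1; 2; 3; 0; 1; 2; 3; 2; 1; 2; 1; 2; 3; 2; 1; 0; 1]);
  ([:: 0; 0; 0; 0; 0; 1; 0; 1], [:: 3; 1; 3; 2; 1; 0; 1; 3; 1; 2; 3; 0; 2; 0; 3; 2; 1; 3; 1; 0; 1; 2; 3; 1; 3; 1; 0; 1; 2; 3; 2; 1; 2; 1; 2; 3; 2; 1; 0; 1]);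
  ([:: 0; 0; 0; 0; 0; 1; -1; 0], [:: 2; 1; 0; 1; 3; 1; 2; 3; 0; 2; 0; 3; 2; 1; 3; 1; 0; 1; 2; 1; 0; 1; 2; 3; 2; 1; 2; 1; 2; 3; 2; 1; 0; 1]);
  ([:: h; h; h; h; h; mh; h; mh], [:: 3; 1; 0; 1; 3; 2; 1; 2; 3; 0; 2; 0; 3; 2; 1; 2; 3; 1; 0; 1; 3; 1; 0; 1; 2; 3; 2; 1; 2; 1; 2; 3; 2; 1; 0; 1]);
  ([:: 0; 0; 0; 0; -1; 1; 0; 0], [:: 3; 0; 1; 2; 3; 2; 1; 2; 1; 2; 3; 2; 1; 0; 3; 1; 0; 1; 2; 3; 2; 1; 2; 1; 2; 3; 2; 1; 0; 1]);
  ([:: 0; 0; 0; -1; 0; 1; 0; 0], [:: 1; 3; 1; 0; 1; 3; 1; 2; 3; 0; 2; 0; 3; 2; 1; 3; 1; 0; 1; 3; 0; 1; 2; 3; 2; 1; 2; 1; 2; 3; 2; 1; 0; 1]);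
  ([:: 0; 0; -1; 0; 0; 1; 0; 0], [:: 1; 0; 1; 3; 0; 1; 2; 3; 0; 2; 0; 3; 2; 1; 0; 3; 2; 3; 2; 1; 2; 1; 2; 3; 2; 1; 0; 1]);
  ([:: 0; -1; 0; 0; 0; 1; 0; 0], [:: 1; 3; 1; 3; 2; 1; 3; 0; 1; 2; 1; 0; 3; 1; 2; 3; 1; 3; 0; 1; 2; 3; 2; 1; 2; 1; 2; 3; 2; 1; 0; 1]);
  ([:: -1; 0; 0; 0; 0; 1; 0; 0], [:: 1; 3; 1; 2; 3; 2; 3; 2; 1; 3; 0; 1; 2; 3; 2; 1; 2; 1; 2; 3; 2; 1; 0; 1]);
  ([:: mh; h; h; mh; h; mh; mh; h], [:: 3; 2; 0; 1; 2; 3; 2; 1; 2; 1; 2; 3; 2; 1; 0; 2; 3; 1; 0; 1; 3; 2; 1; 0; 1; 2; 3; 2; 3; 2; 1; 0; 1; 2; 3; 1; 0; 1]);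
  ([:: mh; h; mh; h; h; mh; mh; h], [:: 2; 3; 1; 3; 0; 1; 2; 1; 0; 3; 1; 3; 2; 1; 0; 1; 3; 2; 1; 0; 1; 2; 3; 2; 3; 2; 1; 0; 1; 2; 3; 1; 0; 1]);
  ([:: mh; mh; h; h; h; mh; mh; h], [:: 2; 3; 2; 0; 1; 2; 3; 0; 2; 0; 3; 2; 1; 0; 2; 3; 2; 1; 0; 1; 3; 2; 1; 0; 1; 2; 3; 2; 3; 2; 1; 0; 1; 2; 3; 1; 0; 1]);
  ([:: 0; 0; 0; 0; 1; 0; 0; 1], [:: 3; 1; 3; 2; 1; 0; 1; 3; 1; 2; 3; 0; 2; 0; 3; 2; 1; 3; 1; 0; 1; 2; 3; 1; 3; 1; 0; 1; 3; 2; 1; 0; 1; 2; 3; 2; 3; 2; 1; 0; 1; 2; 3; 1; 0; 1]);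
  ([:: 0; 0; 0; 0; 1; 0; -1; 0], [:: 2; 1; 0; 1; 3; 1; 2; 3; 0; 2; 0; 3; 2; 1; 3; 1; 0; 1; 2; 1; 0; 1; 3; 2; 1; 0; 1; 2; 3; 2; 3; 2; 1; 0; 1; 2; 3; 1; 0; 1]);
  ([:: 0; 0; 0; 0; 1; -1; 0; 0], [:: 3; 1; 0; 1; 3; 2; 1; 2; 3; 0; 2; 0; 3; 2; 1; 2; 3; 1; 0; 1; 3; 1; 0; 1; 3; 2; 1; 0; 1; 2; 3; 2; 3; 2; 1; 0; 1; 2; 3; 1; 0; 1]);
  ([:: h; h; h; h; mh; h; h; mh], [:: 3; 0; 1; 2; 3; 2; 1; 2; 1; 2; 3; 2; 1; 0; 3; 1; 0; 1; 3; 2; 1; 0; 1; 2; 3; 2; 3; 2; 1; 0; 1; 2; 3; 1; 0; 1]);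
  ([:: 0; 0; 0; -1; 1; 0; 0; 0], [:: 1; 3; 1; 0; 1; 3; 1; 2; 3; 0; 2; 0; 3; 2; 1; 3; 1; 0; 1; 3; 0; 1; 3; 2; 1; 0; 1; 2; 3; 2; 3; 2; 1; 0; 1; 2; 3; 1; 0; 1]);
  ([:: 0; 0; -1; 0; 1; 0; 0; 0], [:: 1; 0; 1; 3; 0; 1; 2; 3; 0; 2; 0; 3; 2; 1; 0; 2; 1; 0; 1; 2; 3; 2; 3; 2; 1; 0; 1; 2; 3; 1; 0; 1]);
  ([:: 0; -1; 0; 0; 1; 0; 0; 0], [:: 1; 3; 1; 3; 2; 1; 3; 0; 1; 2; 1; 0; 3; 1; 2; 3; 1; 3; 0; 1; 3; 2; 1; 0; 1; 2; 3; 2; 3; 2; 1; 0; 1; 2; 3; 1; 0; 1]);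
  ([:: -1; 0; 0; 0; 1; 0; 0; 0], [:: 1; 3; 1; 2; 3; 2; 3; 2; 1; 3; 0; 1; 3; 2; 1; 0; 1; 2; 3; 2; 3; 2; 1; 0; 1; 2; 3; 1; 0; 1]);
  ([:: mh; h; h; h; mh; mh; mh; h], [:: 3; 2; 0; 1; 2; 3; 2; 1; 2; 1; 2; 3; 2; 1; 0; 2; 3; 2; 0; 1; 2; 3; 2; 1; 2; 1; 2; 3; 2; 1; 0; 2]);
  ([:: 0; 0; 0; 1; 0; 0; 0; 1], [:: 3; 1; 3; 2; 1; 0; 1; 3; 1; 2; 3; 0; 2; 0; 3; 2; 1; 3; 1; 0; 1; 2; 3; 1; 3; 2; 0; 1; 2; 3; 2; 1; 2; 1; 2; 3; 2; 1; 0; 2]);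
  ([:: 0; 0; 0; 1; 0; 0; -1; 0], [:: 2; 1; 0; 1; 3; 1; 2; 3; 0; 2; 0; 3; 2; 1; 3; 1; 0; 1; 0; 1; 2; 3; 2; 1; 2; 1; 2; 3; 2; 1; 0; 2]);
  ([:: 0; 0; 0; 1; 0; -1; 0; 0], [:: 3; 1; 0; 1; 3; 2; 1; 2; 3; 0; 2; 0; 3; 2; 1; 2; 3; 1; 0; 1; 3; 2; 0; 1; 2; 3; 2; 1; 2; 1; 2; 3; 2; 1; 0; 2]);
  ([:: 0; 0; 0; 1; -1; 0; 0; 0], [:: 3; 0; 1; 2; 3; 2; 1; 2; 1; 2; 3; 2; 1; 0; 3; 2; 0; 1; 2; 3; 2; 1; 2; 1; 2; 3; 2; 1; 0; 2]);
  ([:: h; h; h; mh; h; h; h; mh], [:: 1; 3; 1; 0; 1; 3; 1; 2; 3; 0; 2; 0; 3; 2; 1; 3; 1; 0; 1; 3; 1; 2; 0; 1; 2; 3; 2; 1; 2; 1; 2; 3; 2; 1; 0; 2]);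
  ([:: 0; 0; -1; 1; 0; 0; 0; 0], [:: 1; 0; 1; 3; 0; 1; 2; 3; 0; 2; 0; 3; 2; 1; 0; 3; 1; 0; 1; 2; 0; 1; 2; 3; 2; 1; 2; 1; 2; 3; 2; 1; 0; 2]);
  ([:: 0; -1; 0; 1; 0; 0; 0; 0], [:: 1; 3; 1; 3; 2; 1; 3; 0; 1; 2; 1; 0; 3; 1; 2; 3; 1; 3; 1; 2; 0; 1; 2; 3; 2; 1; 2; 1; 2; 3; 2; 1; 0; 2]);
  ([:: -1; 0; 0; 1; 0; 0; 0; 0], [:: 1; 3; 1; 2; 3; 2; 3; 2; 1; 3; 1; 2; 0; 1; 2; 3; 2; 1; 2; 1; 2; 3; 2; 1; 0; 2]);
  ([:: 0; 0; 1; 0; 0; 0; 0; 1], [:: 3; 1; 3; 2; 1; 0; 1; 3; 1; 2; 3; 0; 2; 0; 3; 2; 1; 3; 1; 0; 1; 2; 3; 1; 2; 3; 2; 0; 1; 2; 3; 0; 2; 0; 3; 2; 1; 0; 2; 3; 2; 3]);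
  ([:: 0; 0; 1; 0; 0; 0; -1; 0], [:: 2; 1; 0; 1; 3; 1; 2; 3; 0; 2; 0; 3; 2; 1; 3; 1; 0; 1; 2; 3; 2; 3; 2; 0; 1; 2; 3; 0; 2; 0; 3; 2; 1; 0; 2; 3; 2; 3]);
  ([:: 0; 0; 1; 0; 0; -1; 0; 0], [:: 3; 1; 0; 1; 3; 2; 1; 2; 3; 0; 2; 0; 3; 2; 1; 2; 3; 1; 0; 1; 2; 3; 2; 0; 1; 2; 3; 0; 2; 0; 3; 2; 1; 0; 2; 3; 2; 3]);
  ([:: 0; 0; 1; 0; -1; 0; 0; 0], [:: 3; 0; 1; 2; 3; 2; 1; 2; 1; 2; 3; 2; 1; 0; 2; 3; 2; 0; 1; 2; 3; 0; 2; 0; 3; 2; 1; 0; 2; 3; 2; 3]);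
  ([:: 0; 0; 1; -1; 0; 0; 0; 0], [:: 1; 3; 1; 0; 1; 3; 1; 2; 3; 0; 2; 0; 3; 2; 1; 3; 1; 0; 1; 3; 1; 3; 2; 3; 2; 0; 1; 2; 3; 0; 2; 0; 3; 2; 1; 0; 2; 3; 2; 3]);
  ([:: h; h; mh; h; h; h; h; mh], [:: 1; 0; 1; 3; 0; 1; 2; 3; 0; 2; 0; 3; 2; 1; 0; 3; 1; 0; 1; 3; 2; 3; 2; 0; 1; 2; 3; 0; 2; 0; 3; 2; 1; 0; 2; 3; 2; 3]);
  ([:: 0; -1; 1; 0; 0; 0; 0; 0], [:: 1; 3; 1; 3; 2; 1; 3; 0; 1; 2; 1; 0; 3; 1; 2; 3; 1; 3; 1; 3; 2; 3; 2; 0; 1; 2; 3; 0; 2; 0; 3; 2; 1; 0; 2; 3; 2; 3]);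
  ([:: -1; 0; 1; 0; 0; 0; 0; 0], [:: 1; 3; 1; 2; 3; 2; 3; 2; 1; 3; 1; 3; 2; 3; 2; 0; 1; 2; 3; 0; 2; 0; 3; 2; 1; 0; 2; 3; 2; 3]);
  ([:: 0; 1; 0; 0; 0; 0; 0; 1], [:: 3; 1; 3; 2; 1; 0; 1; 3; 1; 2; 3; 0; 2; 0; 3; 2; 1; 3; 1; 0; 1; 2; 3; 1; 3; 0; 1; 3; 2; 1; 2; 1; 2; 3; 1; 0]);
  ([:: 0; 1; 0; 0; 0; 0; -1; 0], [:: 2; 1; 0; 1; 3; 1; 2; 3; 0; 2; 0; 3; 2; 1; 3; 1; 0; 1; 2; 0; 1; 3; 2; 1; 2; 1; 2; 3; 1; 0]);
  ([:: 0; 1; 0; 0; 0; -1; 0; 0], [:: 3; 1; 0; 1; 3; 2; 1; 2; 3; 0; 2; 0; 3; 2; 1; 2; 3; 1; 0; 1; 3; 0; 1; 3; 2; 1; 2; 1; 2; 3; 1; 0]);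
  ([:: 0; 1; 0; 0; -1; 0; 0; 0], [:: 3; 0; 1; 2; 3; 2; 1; 2; 1; 2; 3; 2; 1; 0; 3; 0; 1; 3; 2; 1; 2; 1; 2; 3; 1; 0]);
  ([:: 0; 1; 0; -1; 0; 0; 0; 0], [:: 1; 3; 1; 0; 1; 3; 1; 2; 3; 0; 2; 0; 3; 2; 1; 3; 1; 0; 1; 3; 1; 0; 1; 3; 2; 1; 2; 1; 2; 3; 1; 0]);
  ([:: 0; 1; -1; 0; 0; 0; 0; 0], [:: 1; 0; 1; 3; 0; 1; 2; 3; 0; 2; 0; 3; 2; 1; 0; 3; 1; 0; 1; 0; 1; 3; 2; 1; 2; 1; 2; 3; 1; 0]);
  ([:: h; mh; h; h; h; h; h; mh], [:: 1; 3; 1; 3; 2; 1; 3; 0; 1; 2; 1; 0; 3; 1; 2; 3; 1; 3; 1; 0; 1; 3; 2; 1; 2; 1; 2; 3; 1; 0]);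
  ([:: -1; 1; 0; 0; 0; 0; 0; 0], [:: 1; 3; 1; 2; 3; 2; 3; 2; 1; 3; 1; 0; 1; 3; 2; 1; 2; 1; 2; 3; 1; 0]);
  ([:: h; h; h; h; h; mh; mh; h], [:: 1; 3; 2; 1; 2; 3; 0; 2; 0; 3; 2; 1; 2; 3; 1; 3; 2; 0; 1; 2; 3; 2; 1; 2; 1; 2; 3; 2; 1; 0; 2; 3]);
  ([:: h; h; h; h; mh; h; mh; h], [:: 1; 3; 1; 3; 0; 2; 0; 3; 1; 3; 1; 3; 2; 0; 1; 2; 3; 2; 1; 2; 1; 2; 3; 2; 1; 0; 2; 3]);
  ([:: h; h; h; h; mh; mh; h; h], [:: 3; 2; 1; 2; 3; 0; 2; 0; 3; 2; 1; 0; 1; 2; 3; 2; 1; 2; 1; 2; 3; 2; 1; 0; 2; 3]);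
  ([:: h; h; h; h; mh; mh; mh; mh], [:: 0; 2; 0; 3; 2; 0; 1; 2; 3; 2; 1; 2; 1; 2; 3; 2; 1; 0; 2; 3]);
  ([:: h; h; h; mh; h; h; mh; h], [:: 1; 2; 3; 2; 1; 2; 3; 0; 2; 0; 3; 2; 1; 2; 3; 2; 1; 3; 2; 0; 1; 2; 3; 2; 1; 2; 1; 2; 3; 2; 1; 0; 2; 3]);
  ([:: h; h; h; mh; h; mh; h; h], [:: 3; 1; 2; 3; 2; 1; 2; 3; 0; 2; 0; 3; 2; 1; 2; 3; 2; 1; 2; 0; 1; 2; 3; 2; 1; 2; 1; 2; 3; 2; 1; 0; 2; 3]);
  ([:: h; h; h; mh; h; mh; mh; mh], [:: 2; 1; 2; 3; 2; 1; 2; 1; 2; 3; 2; 1; 2; 3; 2; 0; 1; 2; 3; 2; 1; 2; 1; 2; 3; 2; 1; 0; 2; 3]);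
  ([:: h; h; h; mh; mh; h; h; h], [:: 3; 2; 1; 2; 3; 2; 1; 2; 1; 2; 3; 2; 1; 0; 1; 2; 3; 2; 1; 2; 1; 2; 3; 2; 1; 0; 2; 3]);
  ([:: h; h; h; mh; mh; h; mh; mh], [:: 2; 1; 2; 1; 2; 3; 2; 0; 1; 2; 3; 2; 1; 2; 1; 2; 3; 2; 1; 0; 2; 3]);
  ([:: h; h; h; mh; mh; mh; h; mh], [:: 3; 2; 1; 2; 1; 0; 1; 2; 3; 2; 1; 2; 1; 2; 3; 2; 1; 0; 2; 3]);
  ([:: mh; mh; mh; h; h; h; h; mh], [:: 1; 0; 1; 2; 3; 1; 0; 1; 0; 2; 0; 1; 0; 1; 3; 2; 1; 0; 1; 3; 2; 0; 1; 2; 3; 2; 1; 2; 1; 2; 3; 2; 1; 0; 2; 3]);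
  ([:: 1; 1; 0; 0; 0; 0; 0; 0], [:: 1; 0; 1; 3; 0; 1; 2; 3; 0; 2; 0; 3; 2; 1; 0; 3; 1; 0; 1; 3; 2; 0; 1; 2; 3; 2; 1; 2; 1; 2; 3; 2; 1; 0; 2; 3]);
  ([:: 1; 0; 1; 0; 0; 0; 0; 0], [:: 1; 3; 1; 3; 2; 1; 3; 0; 1; 2; 1; 0; 3; 1; 2; 3; 1; 3; 1; 3; 2; 0; 1; 2; 3; 2; 1; 2; 1; 2; 3; 2; 1; 0; 2; 3]);
  ([:: 0; 1; 1; 0; 0; 0; 0; 0], [:: 1; 3; 1; 2; 3; 2; 3; 2; 1; 3; 1; 3; 2; 0; 1; 2; 3; 2; 1; 2; 1; 2; 3; 2; 1; 0; 2; 3]);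
  ([:: h; h; mh; h; h; h; mh; h], [:: 1; 2; 3; 2; 1; 2; 3; 0; 2; 0; 3; 2; 1; 2; 3; 2; 1; 2; 3; 1; 3; 0; 1; 2; 1; 0; 3; 1; 3; 2]);
  ([:: h; h; mh; h; h; mh; h; h], [:: 3; 1; 2; 3; 2; 1; 2; 3; 0; 2; 0; 3; 2; 1; 2; 3; 2; 1; 3; 2; 3; 1; 3; 0; 1; 2; 1; 0; 3; 1; 3; 2]);
  ([:: h; h; mh; h; h; mh; mh; mh], [:: 2; 1; 2; 3; 2; 1; 2; 1; 2; 3; 2; 1; 3; 1; 3; 0; 1; 2; 1; 0; 3; 1; 3; 2]);
  ([:: h; h; mh; h; mh; h; h; h], [:: 3; 2; 1; 2; 3; 2; 1; 2; 1; 2; 3; 2; 1; 2; 3; 2; 3; 1; 3; 0; 1; 2; 1; 0; 3; 1; 3; 2]);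
  ([:: h; h; mh; h; mh; h; mh; mh], [:: 2; 1; 2; 1; 3; 1; 3; 0; 1; 2; 1; 0; 3; 1; 3; 2]);
  ([:: h; h; mh; h; mh; mh; h; mh], [:: 3; 2; 1; 2; 1; 2; 3; 2; 3; 1; 3; 0; 1; 2; 1; 0; 3; 1; 3; 2]);
  ([:: mh; mh; h; mh; h; h; h; mh], [:: 3; 1; 2; 3; 1; 0; 1; 2; 1; 0; 1; 3; 2; 1; 3; 2; 3; 1; 3; 0; 1; 2; 1; 0; 3; 1; 3; 2]);
  ([:: 1; 0; 0; 1; 0; 0; 0; 0], [:: 1; 3; 1; 3; 2; 1; 3; 0; 1; 2; 1; 0; 3; 1; 2; 3; 1; 3; 1; 2; 3; 1; 3; 0; 1; 2; 1; 0; 3; 1; 3; 2]);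
  ([:: 0; 1; 0; 1; 0; 0; 0; 0], [:: 1; 3; 1; 2; 3; 2; 3; 2; 1; 3; 1; 2; 3; 1; 3; 0; 1; 2; 1; 0; 3; 1; 3; 2]);
  ([:: h; h; mh; mh; h; h; h; h], [:: 3; 2; 1; 2; 3; 2; 1; 2; 1; 2; 3; 2; 1; 2; 3; 1; 0; 1; 3; 2; 0; 1; 2; 3; 0; 2; 0; 3; 2; 1; 0; 2; 3; 1; 0; 1]);
  ([:: h; h; mh; mh; h; h; mh; mh], [:: 2; 1; 2; 1; 2; 1; 0; 1; 3; 2; 0; 1; 2; 3; 0; 2; 0; 3; 2; 1; 0; 2; 3; 1; 0; 1]);
  ([:: h; h; mh; mh; h; mh; h; mh], [:: 3; 2; 1; 2; 1; 2; 3; 1; 0; 1; 3; 2; 0; 1; 2; 3; 0; 2; 0; 3; 2; 1; 0; 2; 3; 1; 0; 1]);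
  ([:: mh; mh; h; h; mh; h; h; mh], [:: 2; 0; 1; 2; 3; 0; 2; 0; 3; 2; 1; 0; 2; 1; 0; 1; 3; 2; 0; 1; 2; 3; 0; 2; 0; 3; 2; 1; 0; 2; 3; 1; 0; 1]);
  ([:: 1; 0; 0; 0; 1; 0; 0; 0], [:: 1; 3; 1; 3; 2; 1; 3; 0; 1; 2; 1; 0; 3; 1; 2; 3; 1; 3; 0; 1; 3; 2; 0; 1; 2; 3; 0; 2; 0; 3; 2; 1; 0; 2; 3; 1; 0; 1]);
  ([:: 0; 1; 0; 0; 1; 0; 0; 0], [:: 1; 3; 1; 2; 3; 2; 3; 2; 1; 3; 0; 1; 3; 2; 0; 1; 2; 3; 0; 2; 0; 3; 2; 1; 0; 2; 3; 1; 0; 1]);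
  ([:: h; h; mh; mh; mh; h; h; mh], [:: 3; 2; 1; 2; 1; 2; 3; 1; 3; 1; 3; 0; 1; 2; 1; 0; 3; 1; 3; 1]);
  ([:: mh; mh; h; h; h; mh; h; mh], [:: 3; 1; 2; 3; 2; 0; 1; 2; 1; 0; 2; 3; 2; 1; 3; 1; 3; 1; 3; 0; 1; 2; 1; 0; 3; 1; 3; 1]);
  ([:: 1; 0; 0; 0; 0; 1; 0; 0], [:: 1; 3; 1; 3; 2; 1; 3; 0; 1; 2; 1; 0; 3; 1; 2; 0; 1; 2; 1; 0; 3; 1; 3; 1]);
  ([:: 0; 1; 0; 0; 0; 1; 0; 0], [:: 1; 3; 1; 2; 3; 2; 3; 2; 3; 0; 1; 2; 1; 0; 3; 1; 3; 1]);
  ([:: mh; mh; h; h; h; h; mh; mh], [:: 2; 1; 0; 1; 2; 3; 0; 2; 0; 3; 2; 1; 0; 1; 2; 0; 1; 3; 2; 0; 1; 2; 3; 0; 2; 0; 3; 2; 1; 0; 2; 3; 1; 0]);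
  ([:: 1; 0; 0; 0; 0; 0; 1; 0], [:: 1; 3; 1; 3; 2; 1; 3; 0; 1; 2; 1; 0; 3; 1; 2; 3; 1; 3; 1; 0; 1; 3; 2; 0; 1; 2; 3; 0; 2; 0; 3; 2; 1; 0; 2; 3; 1; 0]);
  ([:: 0; 1; 0; 0; 0; 0; 1; 0], [:: 1; 3; 1; 2; 3; 2; 3; 2; 1; 3; 1; 0; 1; 3; 2; 0; 1; 2; 3; 0; 2; 0; 3; 2; 1; 0; 2; 3; 1; 0]);
  ([:: mh; mh; h; h; h; h; h; h], [:: 3; 1; 3; 2; 1; 0; 1; 2; 3; 0; 2; 0; 3; 2; 1; 0; 1; 2; 3; 1; 3; 0; 1; 2; 1; 0]);
  ([:: 1; 0; 0; 0; 0; 0; 0; -1], [:: 1; 3; 1; 3; 2; 1; 3; 0; 1; 2; 1; 0; 3; 1; 2; 3; 1; 3; 1; 0; 1; 2; 1; 0]);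
  ([:: 0; 1; 0; 0; 0; 0; 0; -1], [:: 1; 3; 1; 2; 3; 2; 3; 2; 1; 3; 1; 0; 1; 2; 1; 0]);
  ([:: h; mh; h; h; h; h; mh; h], [:: 1; 2; 3; 2; 1; 2; 3; 0; 2; 0; 3; 2; 1; 2; 3; 2; 1; 2; 3; 2; 0; 1; 2; 3; 0; 2; 0; 3; 2; 1; 0; 2; 3; 2]);
  ([:: h; mh; h; h; h; mh; h; h], [:: 3; 1; 2; 3; 2; 1; 2; 3; 0; 2; 0; 3; 2; 1; 2; 3; 2; 1; 3; 2; 3; 2; 0; 1; 2; 3; 0; 2; 0; 3; 2; 1; 0; 2; 3; 2]);
  ([:: h; mh; h; h; h; mh; mh; mh], [:: 2; 1; 2; 3; 2; 1; 2; 1; 2; 3; 2; 1; 3; 2; 0; 1; 2; 3; 0; 2; 0; 3; 2; 1; 0; 2; 3; 2]);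
  ([:: h; mh; h; h; mh; h; h; h], [:: 3; 2; 1; 2; 3; 2; 1; 2; 1; 2; 3; 2; 1; 2; 3; 2; 3; 2; 0; 1; 2; 3; 0; 2; 0; 3; 2; 1; 0; 2; 3; 2]);
  ([:: h; mh; h; h; mh; h; mh; mh], [:: 2; 1; 2; 1; 3; 2; 0; 1; 2; 3; 0; 2; 0; 3; 2; 1; 0; 2; 3; 2]);
  ([:: h; mh; h; h; mh; mh; h; mh], [:: 3; 2; 1; 2; 1; 2; 3; 2; 3; 2; 0; 1; 2; 3; 0; 2; 0; 3; 2; 1; 0; 2; 3; 2]);
  ([:: mh; h; mh; mh; h; h; h; mh], [:: 1; 2; 3; 1; 0; 1; 2; 1; 0; 1; 3; 2; 1; 2; 3; 2; 0; 1; 2; 3; 0; 2; 0; 3; 2; 1; 0; 2; 3; 2]);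
  ([:: 0; 0; 1; 1; 0; 0; 0; 0], [:: 1; 3; 1; 2; 3; 2; 3; 2; 1; 3; 1; 2; 3; 2; 0; 1; 2; 3; 0; 2; 0; 3; 2; 1; 0; 2; 3; 2]);
  ([:: h; mh; h; mh; h; h; h; h], [:: 3; 2; 1; 2; 3; 2; 1; 2; 1; 2; 3; 2; 1; 2; 3; 1; 3; 1; 2; 1; 0; 1; 2; 3; 0; 2; 0; 3; 2; 1; 0; 1; 2; 1; 3; 1]);
  ([:: h; mh; h; mh; h; h; mh; mh], [:: 2; 1; 2; 1; 2; 1; 3; 1; 2; 1; 0; 1; 2; 3; 0; 2; 0; 3; 2; 1; 0; 1; 2; 1; 3; 1]);
  ([:: h; mh; h; mh; h; mh; h; mh], [:: 3; 2; 1; 2; 1; 2; 3; 1; 3; 1; 2; 1; 0; 1; 2; 3; 0; 2; 0; 3; 2; 1; 0; 1; 2; 1; 3; 1]);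
  ([:: mh; h; mh; h; mh; h; h; mh], [:: 1; 3; 0; 1; 2; 1; 0; 1; 2; 1; 0; 1; 2; 3; 0; 2; 0; 3; 2; 1; 0; 1; 2; 1; 3; 1]);
  ([:: 0; 0; 1; 0; 1; 0; 0; 0], [:: 1; 3; 1; 2; 3; 2; 3; 1; 0; 1; 2; 3; 0; 2; 0; 3; 2; 1; 0; 1; 2; 1; 3; 1]);
  ([:: h; mh; h; mh; mh; h; h; mh], [:: 3; 2; 1; 2; 1; 2; 3; 1; 3; 2; 0; 1; 2; 3; 0; 2; 0; 3; 2; 1; 0; 2; 3; 1]);
  ([:: mh; h; mh; h; h; mh; h; mh], [:: 3; 1; 0; 1; 2; 1; 0; 1; 3; 1; 3; 2; 0; 1; 2; 3; 0; 2; 0; 3; 2; 1; 0; 2; 3; 1]);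
  ([:: 0; 0; 1; 0; 0; 1; 0; 0], [:: 1; 3; 1; 2; 3; 2; 3; 2; 1; 2; 0; 1; 2; 3; 0; 2; 0; 3; 2; 1; 0; 2; 3; 1]);
  ([:: mh; h; mh; h; h; h; mh; mh], [:: 2; 1; 2; 1; 3; 0; 1; 2; 1; 0; 3; 1; 2; 1; 2; 3; 1; 2; 1; 0; 1; 2; 3; 0; 2; 0; 3; 2; 1; 0; 1; 2; 1; 3]);
  ([:: 0; 0; 1; 0; 0; 0; 1; 0], [:: 1; 3; 1; 2; 3; 2; 3; 2; 1; 3; 1; 3; 1; 2; 1; 0; 1; 2; 3; 0; 2; 0; 3; 2; 1; 0; 1; 2; 1; 3]);
  ([:: mh; h; mh; h; h; h; h; h], [:: 3; 1; 0; 1; 2; 3; 2; 0; 1; 0; 2; 0; 1; 0; 2; 3; 2; 1; 0; 1; 3; 2; 3; 2; 0; 1; 2; 1; 0; 2; 3; 2]);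
  ([:: 0; 0; 1; 0; 0; 0; 0; -1], [:: 1; 3; 1; 2; 3; 2; 3; 2; 1; 3; 1; 2; 3; 2; 0; 1; 2; 1; 0; 2; 3; 2]);
  ([:: h; mh; mh; h; h; h; h; h], [:: 3; 2; 1; 2; 3; 2; 1; 2; 1; 2; 3; 2; 1; 2; 3; 1; 3; 2; 1; 2; 3; 0; 2; 0; 3; 2; 1; 2; 3; 1]);
  ([:: h; mh; mh; h; h; h; mh; mh], [:: 2; 1; 2; 1; 2; 1; 3; 2; 1; 2; 3; 0; 2; 0; 3; 2; 1; 2; 3; 1]);
  ([:: h; mh; mh; h; h; mh; h; mh], [:: 3; 2; 1; 2; 1; 2; 3; 1; 3; 2; 1; 2; 3; 0; 2; 0; 3; 2; 1; 2; 3; 1]);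
  ([:: mh; h; h; mh; mh; h; h; mh], [:: 1; 3; 0; 2; 0; 2; 1; 2; 3; 0; 2; 0; 3; 2; 1; 2; 3; 1]);
  ([:: 0; 0; 0; 1; 1; 0; 0; 0], [:: 1; 3; 1; 2; 3; 2; 3; 2; 1; 2; 1; 2; 3; 0; 2; 0; 3; 2; 1; 2; 3; 1]);
  ([:: h; mh; mh; h; mh; h; h; mh], [:: 3; 2; 1; 2; 1; 2; 3; 1; 3; 1; 3; 0; 2; 0; 3; 1; 3; 1]);
  ([:: mh; h; h; mh; h; mh; h; mh], [:: 3; 1; 0; 2; 0; 1; 3; 1; 3; 1; 3; 0; 2; 0; 3; 1; 3; 1]);
  ([:: 0; 0; 0; 1; 0; 1; 0; 0], [:: 1; 3; 1; 2; 3; 2; 3; 2; 3; 0; 2; 0; 3; 1; 3; 1]);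
  ([:: mh; h; h; mh; h; h; mh; mh], [:: 3; 2; 3; 2; 1; 0; 2; 0; 1; 2; 3; 1; 2; 3; 0; 2; 0; 3; 2; 1; 2; 3]);
  ([:: 0; 0; 0; 1; 0; 0; 1; 0], [:: 1; 3; 1; 2; 3; 2; 3; 2; 1; 3; 1; 3; 2; 1; 2; 3; 0; 2; 0; 3; 2; 1; 2; 3]);
  ([:: mh; h; h; mh; h; h; h; h], [:: 2; 1; 3; 1; 2; 3; 2; 3; 2; 1; 3; 1; 2; 0; 2; 0]);
  ([:: 0; 0; 0; 1; 0; 0; 0; -1], [:: 1; 3; 1; 2; 3; 2; 3; 2; 1; 3; 1; 0; 2; 0]);
  ([:: h; mh; mh; mh; h; h; h; mh], [:: 3; 2; 1; 2; 1; 2; 3; 1; 2; 3; 2; 1; 2; 3; 0; 2; 0; 3; 2; 1; 2; 3; 2; 1]);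
  ([:: mh; h; h; h; mh; mh; h; mh], [:: 1; 2; 3; 0; 2; 0; 2; 1; 2; 3; 0; 2; 0; 3; 2; 1; 2; 3; 2; 1]);
  ([:: 0; 0; 0; 0; 1; 1; 0; 0], [:: 1; 3; 1; 2; 3; 2; 3; 2; 1; 3; 2; 3; 2; 1; 2; 3; 0; 2; 0; 3; 2; 1; 2; 3; 2; 1]);
  ([:: mh; h; h; h; mh; h; mh; mh], [:: 2; 0; 1; 3; 0; 1; 2; 1; 0; 3; 1; 0; 2; 3; 1; 2; 3; 2; 1; 2; 3; 0; 2; 0; 3; 2; 1; 2; 3; 2; 1; 3]);
  ([:: 0; 0; 0; 0; 1; 0; 1; 0], [:: 1; 3; 1; 2; 3; 2; 3; 2; 1; 3; 1; 3; 1; 2; 3; 2; 1; 2; 3; 0; 2; 0; 3; 2; 1; 2; 3; 2; 1; 3]);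
  ([:: mh; h; h; h; mh; h; h; h], [:: 1; 3; 2; 3; 1; 3; 1; 3; 2; 3; 1; 3; 1; 3; 2; 3; 1; 2; 1; 2; 3; 2; 1; 2; 1; 2; 3; 2; 1; 2]);
  ([:: 0; 0; 0; 0; 1; 0; 0; -1], [:: 1; 3; 1; 2; 3; 2; 3; 2; 1; 3; 1; 2; 1; 2; 3; 2; 1; 2; 1; 2; 3; 2; 1; 2]);
  ([:: mh; h; h; h; h; mh; mh; mh], [:: 2; 3; 0; 2; 0; 3; 2; 3; 2; 1; 2; 3; 2; 1; 2; 1; 2; 3; 2; 1; 2; 3]);
  ([:: 0; 0; 0; 0; 0; 1; 1; 0], [:: 1; 3; 1; 2; 3; 2; 3; 2; 1; 3; 1; 3; 2; 1; 2; 3; 2; 1; 2; 1; 2; 3; 2; 1; 2; 3]);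
  ([:: mh; h; h; h; h; mh; h; h], [:: 3; 1; 2; 3; 2; 3; 2; 1; 3; 2; 1; 2; 1; 2]);
  ([:: 0; 0; 0; 0; 0; 1; 0; -1], [:: 1; 3; 1; 2; 3; 2; 3; 2; 1; 3; 1; 2; 1; 2; 1; 2]);
  ([:: mh; h; h; h; h; h; mh; h], [:: 3; 2; 3; 1; 3; 1; 3; 2; 3; 1; 3; 1; 3; 1; 2; 1; 2; 3]);
  ([:: 0; 0; 0; 0; 0; 0; 1; -1], [:: 1; 3; 1; 2; 3; 2; 3; 2; 1; 3; 1; 3; 2; 1; 2; 1; 2; 3])].

Definition T1 : seq (seq rat * seq nat) := [::
  ([:: 1; 1; 0; 0; 0; 0; 0; 0], [::]);
  ([:: -1; -1; 0; 0; 0; 0; 0; 0], [:: 0; 1; 2; 3; 2; 1; 2; 3; 0; 2; 0; 3; 2; 1; 2; 3; 2; 1; 0]);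
  ([:: 0; 1; -1; 0; 0; 0; 0; 0], [:: 3; 0; 1; 2; 3; 2; 1; 2; 3; 0; 2; 0; 3; 2; 1; 2; 3; 2; 1; 0; 3]);
  ([:: 0; 1; 0; -1; 0; 0; 0; 0], [:: 2; 0; 1; 3; 2; 1; 2; 3; 0; 2; 0; 3; 2; 1; 2; 3; 1; 0; 2]);
  ([:: 0; 1; 0; 0; -1; 0; 0; 0], [:: 1; 3; 2; 1; 0; 1; 3; 1; 2; 3; 0; 2; 0; 3; 2; 1; 3; 1; 0; 1; 2; 3; 1]);
  ([:: 0; 1; 0; 0; 0; -1; 0; 0], [:: 1; 0; 1; 3; 2; 1; 2; 3; 0; 2; 0; 3; 2; 1; 2; 3; 1; 0; 1]);
  ([:: 0; 1; 0; 0; 0; 0; -1; 0], [:: 3; 2; 1; 0; 1; 3; 1; 2; 3; 0; 2; 0; 3; 2; 1; 3; 1; 0; 1; 2; 3]);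
  ([:: 0; 1; 0; 0; 0; 0; 0; 1], [:: 0; 1; 2; 3; 2; 1; 2; 1; 2; 3; 2; 1; 0]);
  ([:: 1; 0; 0; 0; 0; 0; 0; -1], [:: 3; 1; 3; 0; 1; 2; 1; 0; 3; 1; 3]);
  ([:: 1; 0; 0; 0; 0; 0; 1; 0], [:: 0; 1; 2; 3; 2; 0; 1; 0; 2; 0; 1; 0; 2; 3; 2; 1; 0]);
  ([:: 1; 0; 0; 0; 0; 1; 0; 0], [:: 1; 0; 1; 2; 1; 0; 1]);
  ([:: 1; 0; 0; 0; 1; 0; 0; 0], [:: 1; 0; 1; 2; 3; 2; 0; 1; 0; 2; 0; 1; 0; 2; 3; 2; 1; 0; 1]);
  ([:: 1; 0; 0; 1; 0; 0; 0; 0], [:: 2; 0; 1; 2; 1; 0; 2]);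
  ([:: 1; 0; 1; 0; 0; 0; 0; 0], [:: 0; 1; 2; 1; 2; 3; 2; 1; 0; 2; 0; 1; 2; 3; 2; 1; 2; 1; 0]);
  ([:: h; h; mh; mh; mh; h; h; mh], [:: 1; 3; 0; 1; 2; 3; 2; 1; 2; 1; 2; 3; 2; 1; 0; 3; 1]);
  ([:: h; h; mh; mh; h; mh; h; mh], [:: 3; 1; 0; 1; 2; 3; 2; 1; 2; 1; 2; 3; 2; 1; 0; 1; 3]);
  ([:: h; h; mh; mh; h; h; mh; mh], [:: 1; 2; 1; 0; 1; 3; 1; 2; 3; 0; 2; 0; 3; 2; 1; 3; 1; 0; 1; 2; 1]);
  ([:: h; h; mh; mh; h; h; h; h], [:: 2; 1; 0; 1; 2; 3; 1; 0; 1; 0; 2; 0; 1; 0; 1; 3; 2; 1; 0; 1; 2]);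
  ([:: h; h; mh; h; mh; mh; h; mh], [:: 1; 0; 1; 3; 1; 2; 3; 0; 2; 0; 3; 2; 1; 3; 1; 0; 1]);
  ([:: h; h; mh; h; mh; h; mh; mh], [:: 3; 1; 0; 1; 3; 1; 2; 3; 0; 2; 0; 3; 2; 1; 3; 1; 0; 1; 3]);
  ([:: h; h; mh; h; mh; h; h; h], [:: 3; 0; 1; 3; 1; 2; 3; 0; 2; 0; 3; 2; 1; 3; 1; 0; 3]);
  ([:: h; h; mh; h; h; mh; mh; mh], [:: 0; 1; 3; 1; 2; 3; 0; 2; 0; 3; 2; 1; 3; 1; 0]);
  ([:: h; h; mh; h; h; mh; h; h], [:: 0; 1; 2; 3; 1; 0; 1; 0; 2; 0; 1; 0; 1; 3; 2; 1; 0]);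
  ([:: h; h; mh; h; h; h; mh; h], [:: 3; 0; 1; 2; 3; 1; 0; 1; 0; 2; 0; 1; 0; 1; 3; 2; 1; 0; 3]);
  ([:: h; h; h; mh; mh; mh; h; mh], [:: 1; 3; 2; 1; 3; 0; 1; 2; 1; 0; 3; 1; 2; 3; 1]);
  ([:: h; h; h; mh; mh; h; mh; mh], [:: 0; 1; 3; 0; 1; 2; 3; 0; 2; 0; 3; 2; 1; 0; 3; 1; 0]);
  ([:: h; h; h; mh; mh; h; h; h], [:: 0; 1; 2; 3; 0; 2; 0; 3; 2; 1; 0]);
  ([:: h; h; h; mh; h; mh; mh; mh], [:: 3; 2; 1; 3; 0; 1; 2; 1; 0; 3; 1; 2; 3]);
  ([:: h; h; h; mh; h; mh; h; h], [:: 3; 1; 2; 1; 3; 0; 1; 2; 1; 0; 3; 1; 2; 1; 3]);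
  ([:: h; h; h; mh; h; h; mh; h], [:: 1; 0; 1; 2; 3; 0; 2; 0; 3; 2; 1; 0; 1]);
  ([:: h; h; h; h; mh; mh; mh; mh], [:: 2; 1; 0; 1; 3; 0; 1; 2; 3; 0; 2; 0; 3; 2; 1; 0; 3; 1; 0; 1; 2]);
  ([:: h; h; h; h; mh; mh; h; h], [:: 1; 2; 1; 0; 1; 2; 3; 0; 2; 0; 3; 2; 1; 0; 1; 2; 1]);
  ([:: h; h; h; h; mh; h; mh; h], [:: 3; 1; 3; 2; 0; 1; 2; 3; 0; 2; 0; 3; 2; 1; 0; 2; 3; 1; 3]);
  ([:: h; h; h; h; h; mh; mh; h], [:: 3; 2; 3; 2; 0; 1; 2; 1; 0; 2; 3; 2; 3]);
  ([:: 0; -1; 1; 0; 0; 0; 0; 0], [:: 3; 0; 1; 2; 3; 2; 1; 2; 3; 0; 2; 0; 3; 2; 1; 2; 3; 2; 1; 0; 3; 0; 1; 2; 3; 2; 1; 2; 3; 0; 2; 0; 3; 2; 1; 2; 3; 2; 1; 0]);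
  ([:: 0; -1; 0; 1; 0; 0; 0; 0], [:: 2; 0; 1; 3; 2; 1; 2; 3; 0; 2; 0; 3; 2; 1; 2; 3; 1; 0; 2; 0; 1; 2; 3; 2; 1; 2; 3; 0; 2; 0; 3; 2; 1; 2; 3; 2; 1; 0]);
  ([:: 0; -1; 0; 0; 1; 0; 0; 0], [:: 1; 3; 2; 1; 0; 1; 3; 1; 2; 3; 0; 2; 0; 3; 2; 1; 3; 1; 0; 1; 2; 3; 1; 0; 1; 2; 3; 2; 1; 2; 3; 0; 2; 0; 3; 2; 1; 2; 3; 2; 1; 0]);
  ([:: 0; -1; 0; 0; 0; 1; 0; 0], [:: 1; 0; 1; 3; 2; 1; 2; 3; 0; 2; 0; 3; 2; 1; 2; 3; 1; 0; 1; 0; 1; 2; 3; 2; 1; 2; 3; 0; 2; 0; 3; 2; 1; 2; 3; 2; 1; 0]);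
  ([:: 0; -1; 0; 0; 0; 0; 1; 0], [:: 3; 2; 1; 0; 1; 3; 1; 2; 3; 0; 2; 0; 3; 2; 1; 3; 1; 0; 1; 2; 3; 0; 1; 2; 3; 2; 1; 2; 3; 0; 2; 0; 3; 2; 1; 2; 3; 2; 1; 0]);
  ([:: 0; -1; 0; 0; 0; 0; 0; -1], [:: 0; 1; 2; 3; 2; 1; 3; 0; 2; 0; 3; 2; 1; 2; 3; 2; 1; 0]);
  ([:: -1; 0; 0; 0; 0; 0; 0; 1], [:: 3; 1; 3; 0; 1; 2; 1; 0; 3; 1; 3; 0; 1; 2; 3; 2; 1; 2; 3; 0; 2; 0; 3; 2; 1; 2; 3; 2; 1; 0]);
  ([:: -1; 0; 0; 0; 0; 0; -1; 0], [:: 0; 1; 2; 3; 2; 0; 1; 0; 2; 0; 1; 0; 1; 2; 3; 0; 2; 0; 3; 2; 1; 2; 3; 2; 1; 0]);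
  ([:: -1; 0; 0; 0; 0; -1; 0; 0], [:: 1; 0; 1; 2; 1; 0; 1; 0; 1; 2; 3; 2; 1; 2; 3; 0; 2; 0; 3; 2; 1; 2; 3; 2; 1; 0]);
  ([:: -1; 0; 0; 0; -1; 0; 0; 0], [:: 1; 0; 1; 2; 3; 2; 0; 1; 0; 2; 0; 1; 0; 2; 3; 2; 1; 0; 1; 0; 1; 2; 3; 2; 1; 2; 3; 0; 2; 0; 3; 2; 1; 2; 3; 2; 1; 0]);
  ([:: -1; 0; 0; -1; 0; 0; 0; 0], [:: 2; 0; 1; 2; 1; 0; 2; 0; 1; 2; 3; 2; 1; 2; 3; 0; 2; 0; 3; 2; 1; 2; 3; 2; 1; 0]);
  ([:: -1; 0; -1; 0; 0; 0; 0; 0], [:: 0; 1; 2; 1; 2; 3; 2; 1; 0; 2; 0; 1; 2; 3; 2; 1; 3; 2; 1; 2; 3; 0; 2; 0; 3; 2; 1; 2; 3; 2; 1; 0]);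
  ([:: mh; mh; h; h; h; mh; mh; h], [:: 1; 3; 0; 1; 2; 3; 2; 1; 2; 1; 2; 3; 2; 1; 0; 3; 1; 0; 1; 2; 3; 2; 1; 2; 3; 0; 2; 0; 3; 2; 1; 2; 3; 2; 1; 0]);
  ([:: mh; mh; h; h; mh; h; mh; h], [:: 3; 1; 0; 1; 2; 3; 2; 1; 2; 1; 2; 3; 2; 1; 0; 1; 3; 0; 1; 2; 3; 2; 1; 2; 3; 0; 2; 0; 3; 2; 1; 2; 3; 2; 1; 0]);
  ([:: mh; mh; h; h; mh; mh; h; h], [:: 1; 2; 1; 0; 1; 3; 1; 2; 3; 0; 2; 0; 3; 2; 1; 3; 1; 0; 1; 2; 1; 0; 1; 2; 3; 2; 1; 2; 3; 0; 2; 0; 3; 2; 1; 2; 3; 2; 1; 0]);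
  ([:: mh; mh; h; h; mh; mh; mh; mh], [:: 2; 1; 0; 1; 2; 3; 1; 0; 1; 0; 2; 0; 1; 0; 1; 3; 2; 1; 0; 1; 2; 0; 1; 2; 3; 2; 1; 2; 3; 0; 2; 0; 3; 2; 1; 2; 3; 2; 1; 0]);
  ([:: mh; mh; h; mh; h; h; mh; h], [:: 1; 0; 1; 3; 1; 2; 3; 0; 2; 0; 3; 2; 1; 3; 1; 0; 1; 0; 1; 2; 3; 2; 1; 2; 3; 0; 2; 0; 3; 2; 1; 2; 3; 2; 1; 0]);
  ([:: mh; mh; h; mh; h; mh; h; h], [:: 3; 1; 0; 1; 3; 1; 2; 3; 0; 2; 0; 3; 2; 1; 3; 1; 0; 1; 3; 0; 1; 2; 3; 2; 1; 2; 3; 0; 2; 0; 3; 2; 1; 2; 3; 2; 1; 0]);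
  ([:: mh; mh; h; mh; h; mh; mh; mh], [:: 3; 0; 1; 3; 1; 2; 3; 0; 2; 0; 3; 2; 1; 3; 1; 0; 3; 0; 1; 2; 3; 2; 1; 2; 3; 0; 2; 0; 3; 2; 1; 2; 3; 2; 1; 0]);
  ([:: mh; mh; h; mh; mh; h; h; h], [:: 0; 1; 3; 1; 2; 3; 0; 2; 0; 3; 2; 1; 3; 2; 3; 2; 1; 2; 3; 0; 2; 0; 3; 2; 1; 2; 3; 2; 1; 0]);
  ([:: mh; mh; h; mh; mh; h; mh; mh], [:: 0; 1; 2; 3; 1; 0; 1; 0; 2; 0; 1; 0; 1; 2; 1; 2; 3; 0; 2; 0; 3; 2; 1; 2; 3; 2; 1; 0]);
  ([:: mh; mh; h; mh; mh; mh; h; mh], [:: 3; 0; 1; 2; 3; 1; 0; 1; 0; 2; 0; 1; 0; 1; 3; 2; 1; 0; 3; 0; 1; 2; 3; 2; 1; 2; 3; 0; 2; 0; 3; 2; 1; 2; 3; 2; 1; 0]);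
  ([:: mh; mh; mh; h; h; h; mh; h], [:: 1; 3; 2; 1; 3; 0; 1; 2; 1; 0; 3; 1; 2; 3; 1; 0; 1; 2; 3; 2; 1; 2; 3; 0; 2; 0; 3; 2; 1; 2; 3; 2; 1; 0]);
  ([:: mh; mh; mh; h; h; mh; h; h], [:: 0; 1; 3; 0; 1; 2; 3; 0; 2; 0; 3; 2; 1; 0; 3; 2; 3; 2; 1; 2; 3; 0; 2; 0; 3; 2; 1; 2; 3; 2; 1; 0]);
  ([:: mh; mh; mh; h; h; mh; mh; mh], [:: 0; 1; 2; 3; 0; 2; 0; 2; 1; 2; 3; 0; 2; 0; 3; 2; 1; 2; 3; 2; 1; 0]);
  ([:: mh; mh; mh; h; mh; h; h; h], [:: 3; 2; 1; 3; 0; 1; 2; 1; 0; 3; 1; 2; 3; 0; 1; 2; 3; 2; 1; 2; 3; 0; 2; 0; 3; 2; 1; 2; 3; 2; 1; 0]);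
  ([:: mh; mh; mh; h; mh; h; mh; mh], [:: 3; 1; 2; 1; 3; 0; 1; 2; 1; 0; 3; 1; 2; 1; 3; 0; 1; 2; 3; 2; 1; 2; 3; 0; 2; 0; 3; 2; 1; 2; 3; 2; 1; 0]);
  ([:: mh; mh; mh; h; mh; mh; h; mh], [:: 1; 0; 1; 2; 3; 0; 2; 0; 3; 2; 1; 0; 1; 0; 1; 2; 3; 2; 1; 2; 3; 0; 2; 0; 3; 2; 1; 2; 3; 2; 1; 0]);
  ([:: mh; mh; mh; mh; h; h; h; h], [:: 2; 1; 0; 1; 3; 0; 1; 2; 3; 0; 2; 0; 3; 2; 1; 0; 3; 1; 0; 1; 2; 0; 1; 2; 3; 2; 1; 2; 3; 0; 2; 0; 3; 2; 1; 2; 3; 2; 1; 0]);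
  ([:: mh; mh; mh; mh; h; h; mh; mh], [:: 1; 2; 1; 0; 1; 2; 3; 0; 2; 0; 3; 2; 1; 0; 1; 2; 1; 0; 1; 2; 3; 2; 1; 2; 3; 0; 2; 0; 3; 2; 1; 2; 3; 2; 1; 0]);
  ([:: mh; mh; mh; mh; h; mh; h; mh], [:: 3; 1; 3; 2; 0; 1; 2; 3; 0; 2; 0; 3; 2; 1; 0; 2; 3; 1; 3; 0; 1; 2; 3; 2; 1; 2; 3; 0; 2; 0; 3; 2; 1; 2; 3; 2; 1; 0]);
  ([:: mh; mh; mh; mh; mh; h; h; mh], [:: 3; 2; 3; 2; 0; 1; 2; 1; 0; 2; 3; 2; 3; 0; 1; 2; 3; 2; 1; 2; 3; 0; 2; 0; 3; 2; 1; 2; 3; 2; 1; 0]);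
  ([:: 0; 0; -1; 0; 0; 0; 0; -1], [:: 3; 1; 3; 0; 1; 2; 1; 0; 3; 1; 0; 1; 2; 3; 2; 1; 2; 3; 0; 2; 0; 3; 2; 1; 2; 3; 2; 1; 0; 3]);
  ([:: 0; 0; -1; 0; 0; 0; 1; 0], [:: 0; 1; 2; 3; 2; 0; 1; 0; 2; 0; 1; 0; 2; 3; 2; 1; 0; 3; 0; 1; 2; 3; 2; 1; 2; 3; 0; 2; 0; 3; 2; 1; 2; 3; 2; 1; 0; 3]);
  ([:: 0; 0; -1; 0; 0; 1; 0; 0], [:: 1; 0; 1; 2; 1; 0; 1; 3; 0; 1; 2; 3; 2; 1; 2; 3; 0; 2; 0; 3; 2; 1; 2; 3; 2; 1; 0; 3]);
  ([:: 0; 0; -1; 0; 1; 0; 0; 0], [:: 1; 0; 1; 2; 3; 2; 0; 1; 0; 2; 0; 1; 0; 2; 3; 2; 1; 0; 1; 3; 0; 1; 2; 3; 2; 1; 2; 3; 0; 2; 0; 3; 2; 1; 2; 3; 2; 1; 0; 3]);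
  ([:: 0; 0; -1; 1; 0; 0; 0; 0], [:: 2; 0; 1; 2; 1; 0; 2; 3; 0; 1; 2; 3; 2; 1; 2; 3; 0; 2; 0; 3; 2; 1; 2; 3; 2; 1; 0; 3]);
  ([:: mh; h; mh; mh; mh; mh; h; mh], [:: 1; 3; 2; 1; 3; 0; 1; 2; 1; 0; 3; 1; 2; 3; 1; 3; 0; 1; 2; 3; 2; 1; 2; 3; 0; 2; 0; 3; 2; 1; 2; 3; 2; 1; 0; 3]);
  ([:: mh; h; mh; mh; mh; h; mh; mh], [:: 0; 1; 3; 0; 1; 2; 3; 0; 2; 0; 3; 2; 1; 0; 3; 1; 0; 3; 0; 1; 2; 3; 2; 1; 2; 3; 0; 2; 0; 3; 2; 1; 2; 3; 2; 1; 0; 3]);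
  ([:: mh; h; mh; mh; mh; h; h; h], [:: 0; 1; 2; 3; 0; 2; 0; 3; 2; 1; 0; 3; 0; 1; 2; 3; 2; 1; 2; 3; 0; 2; 0; 3; 2; 1; 2; 3; 2; 1; 0; 3]);
  ([:: mh; h; mh; mh; h; mh; mh; mh], [:: 3; 2; 1; 3; 0; 1; 2; 1; 0; 3; 1; 2; 0; 1; 2; 3; 2; 1; 2; 3; 0; 2; 0; 3; 2; 1; 2; 3; 2; 1; 0; 3]);
  ([:: mh; h; mh; mh; h; mh; h; h], [:: 3; 1; 2; 1; 3; 0; 1; 2; 1; 0; 3; 1; 2; 1; 0; 1; 2; 3; 2; 1; 2; 3; 0; 2; 0; 3; 2; 1; 2; 3; 2; 1; 0; 3]);
  ([:: mh; h; mh; mh; h; h; mh; h], [:: 1; 0; 1; 2; 3; 0; 2; 0; 3; 2; 1; 0; 1; 3; 0; 1; 2; 3; 2; 1; 2; 3; 0; 2; 0; 3; 2; 1; 2; 3; 2; 1; 0; 3]);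
  ([:: mh; h; mh; h; mh; mh; mh; mh], [:: 2; 1; 0; 1; 3; 0; 1; 2; 3; 0; 2; 0; 3; 2; 1; 0; 3; 1; 0; 1; 2; 3; 0; 1; 2; 3; 2; 1; 2; 3; 0; 2; 0; 3; 2; 1; 2; 3; 2; 1; 0; 3]);
  ([:: mh; h; mh; h; mh; mh; h; h], [:: 1; 2; 1; 0; 1; 2; 3; 0; 2; 0; 3; 2; 1; 0; 1; 2; 1; 3; 0; 1; 2; 3; 2; 1; 2; 3; 0; 2; 0; 3; 2; 1; 2; 3; 2; 1; 0; 3]);
  ([:: mh; h; mh; h; mh; h; mh; h], [:: 3; 1; 3; 2; 0; 1; 2; 3; 0; 2; 0; 3; 2; 1; 0; 2; 3; 1; 0; 1; 2; 3; 2; 1; 2; 3; 0; 2; 0; 3; 2; 1; 2; 3; 2; 1; 0; 3]);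
  ([:: mh; h; mh; h; h; mh; mh; h], [:: 3; 2; 3; 2; 0; 1; 2; 1; 0; 2; 3; 2; 0; 1; 2; 3; 2; 1; 2; 3; 0; 2; 0; 3; 2; 1; 2; 3; 2; 1; 0; 3]);
  ([:: 0; 0; 0; -1; 0; 0; 0; -1], [:: 3; 1; 3; 0; 1; 2; 1; 0; 3; 1; 3; 2; 0; 1; 3; 2; 1; 2; 3; 0; 2; 0; 3; 2; 1; 2; 3; 1; 0; 2]);
  ([:: 0; 0; 0; -1; 0; 0; 1; 0], [:: 0; 1; 2; 3; 2; 0; 1; 0; 2; 0; 1; 0; 2; 3; 2; 1; 0; 2; 0; 1; 3; 2; 1; 2; 3; 0; 2; 0; 3; 2; 1; 2; 3; 1; 0; 2]);
  ([:: 0; 0; 0; -1; 0; 1; 0; 0], [:: 1; 0; 1; 2; 1; 0; 1; 2; 0; 1; 3; 2; 1; 2; 3; 0; 2; 0; 3; 2; 1; 2; 3; 1; 0; 2]);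
  ([:: 0; 0; 0; -1; 1; 0; 0; 0], [:: 1; 0; 1; 2; 3; 2; 0; 1; 0; 2; 0; 1; 0; 2; 3; 2; 1; 0; 1; 2; 0; 1; 3; 2; 1; 2; 3; 0; 2; 0; 3; 2; 1; 2; 3; 1; 0; 2]);
  ([:: 0; 0; 1; -1; 0; 0; 0; 0], [:: 0; 1; 2; 1; 2; 3; 2; 1; 0; 2; 0; 1; 2; 3; 2; 1; 2; 1; 0; 2; 0; 1; 3; 2; 1; 2; 3; 0; 2; 0; 3; 2; 1; 2; 3; 1; 0; 2]);
  ([:: mh; h; h; mh; mh; mh; mh; mh], [:: 2; 1; 0; 1; 3; 0; 1; 2; 3; 0; 2; 0; 3; 2; 1; 0; 3; 1; 0; 1; 0; 1; 3; 2; 1; 2; 3; 0; 2; 0; 3; 2; 1; 2; 3; 1; 0; 2]);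
  ([:: mh; h; h; mh; mh; mh; h; h], [:: 1; 2; 1; 0; 1; 2; 3; 0; 2; 0; 3; 2; 1; 0; 1; 2; 1; 2; 0; 1; 3; 2; 1; 2; 3; 0; 2; 0; 3; 2; 1; 2; 3; 1; 0; 2]);
  ([:: mh; h; h; mh; mh; h; mh; h], [:: 3; 1; 3; 2; 0; 1; 2; 3; 0; 2; 0; 3; 2; 1; 0; 2; 3; 1; 3; 2; 0; 1; 3; 2; 1; 2; 3; 0; 2; 0; 3; 2; 1; 2; 3; 1; 0; 2]);
  ([:: mh; h; h; mh; h; mh; mh; h], [:: 3; 2; 3; 2; 0; 1; 2; 1; 0; 2; 3; 2; 3; 2; 0; 1; 3; 2; 1; 2; 3; 0; 2; 0; 3; 2; 1; 2; 3; 1; 0; 2]);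
  ([:: 0; 0; 0; 0; -1; 0; 0; -1], [:: 3; 1; 3; 0; 1; 2; 1; 0; 3; 1; 3; 1; 3; 2; 1; 0; 1; 3; 1; 2; 3; 0; 2; 0; 3; 2; 1; 3; 1; 0; 1; 2; 3; 1]);
  ([:: 0; 0; 0; 0; -1; 0; 1; 0], [:: 0; 1; 2; 3; 2; 0; 1; 0; 2; 0; 1; 0; 2; 3; 2; 1; 0; 1; 3; 2; 1; 0; 1; 3; 1; 2; 3; 0; 2; 0; 3; 2; 1; 3; 1; 0; 1; 2; 3; 1]);
  ([:: 0; 0; 0; 0; -1; 1; 0; 0], [:: 1; 0; 1; 2; 1; 0; 3; 2; 1; 0; 1; 3; 1; 2; 3; 0; 2; 0; 3; 2; 1; 3; 1; 0; 1; 2; 3; 1]);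
  ([:: 0; 0; 0; 1; -1; 0; 0; 0], [:: 2; 0; 1; 2; 1; 0; 2; 1; 3; 2; 1; 0; 1; 3; 1; 2; 3; 0; 2; 0; 3; 2; 1; 3; 1; 0; 1; 2; 3; 1]);
  ([:: 0; 0; 1; 0; -1; 0; 0; 0], [:: 0; 1; 2; 1; 2; 3; 2; 1; 0; 2; 0; 1; 2; 3; 2; 1; 2; 1; 0; 1; 3; 2; 1; 0; 1; 3; 1; 2; 3; 0; 2; 0; 3; 2; 1; 3; 1; 0; 1; 2; 3; 1]);
  ([:: mh; h; h; h; mh; mh; mh; h], [:: 3; 2; 3; 2; 0; 1; 2; 1; 0; 2; 3; 2; 3; 1; 3; 2; 1; 0; 1; 3; 1; 2; 3; 0; 2; 0; 3; 2; 1; 3; 1; 0; 1; 2; 3; 1]);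
  ([:: 0; 0; 0; 0; 0; -1; 0; -1], [:: 3; 1; 3; 0; 1; 2; 1; 0; 3; 1; 3; 1; 0; 1; 3; 2; 1; 2; 3; 0; 2; 0; 3; 2; 1; 2; 3; 1; 0; 1]);
  ([:: 0; 0; 0; 0; 0; -1; 1; 0], [:: 0; 1; 2; 3; 2; 0; 1; 0; 2; 0; 1; 0; 2; 3; 2; 1; 0; 1; 0; 1; 3; 2; 1; 2; 3; 0; 2; 0; 3; 2; 1; 2; 3; 1; 0; 1]);
  ([:: 0; 0; 0; 0; 1; -1; 0; 0], [:: 1; 0; 1; 2; 3; 2; 0; 1; 0; 2; 0; 1; 0; 2; 3; 2; 3; 2; 1; 2; 3; 0; 2; 0; 3; 2; 1; 2; 3; 1; 0; 1]);
  ([:: 0; 0; 0; 1; 0; -1; 0; 0], [:: 2; 0; 1; 2; 1; 0; 2; 1; 0; 1; 3; 2; 1; 2; 3; 0; 2; 0; 3; 2; 1; 2; 3; 1; 0; 1]);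
  ([:: 0; 0; 1; 0; 0; -1; 0; 0], [:: 0; 1; 2; 1; 2; 3; 2; 1; 0; 2; 0; 1; 2; 3; 2; 1; 2; 1; 0; 1; 0; 1; 3; 2; 1; 2; 3; 0; 2; 0; 3; 2; 1; 2; 3; 1; 0; 1]);
  ([:: 0; 0; 0; 0; 0; 0; -1; -1], [:: 3; 1; 3; 0; 1; 2; 1; 0; 3; 1; 2; 1; 0; 1; 3; 1; 2; 3; 0; 2; 0; 3; 2; 1; 3; 1; 0; 1; 2; 3]);
  ([:: 0; 0; 0; 0; 0; 1; -1; 0], [:: 1; 0; 1; 2; 1; 0; 1; 3; 2; 1; 0; 1; 3; 1; 2; 3; 0; 2; 0; 3; 2; 1; 3; 1; 0; 1; 2; 3]);
  ([:: 0; 0; 0; 0; 1; 0; -1; 0], [:: 1; 0; 1; 2; 3; 2; 0; 1; 0; 2; 0; 1; 0; 2; 3; 2; 1; 0; 1; 3; 2; 1; 0; 1; 3; 1; 2; 3; 0; 2; 0; 3; 2; 1; 3; 1; 0; 1; 2; 3]);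
  ([:: 0; 0; 0; 1; 0; 0; -1; 0], [:: 2; 0; 1; 2; 1; 0; 2; 3; 2; 1; 0; 1; 3; 1; 2; 3; 0; 2; 0; 3; 2; 1; 3; 1; 0; 1; 2; 3]);
  ([:: 0; 0; 1; 0; 0; 0; -1; 0], [:: 0; 1; 2; 1; 2; 3; 2; 1; 0; 2; 0; 1; 2; 3; 2; 1; 2; 1; 0; 3; 2; 1; 0; 1; 3; 1; 2; 3; 0; 2; 0; 3; 2; 1; 3; 1; 0; 1; 2; 3]);
  ([:: 0; 0; 0; 0; 0; 0; 1; 1], [:: 0; 1; 2; 3; 2; 0; 1; 0; 2; 0; 1; 0; 1; 2; 1; 2; 3; 2; 1; 0]);
  ([:: 0; 0; 0; 0; 0; 1; 0; 1], [:: 1; 0; 1; 2; 1; 0; 1; 0; 1; 2; 3; 2; 1; 2; 1; 2; 3; 2; 1; 0]);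
  ([:: 0; 0; 0; 0; 1; 0; 0; 1], [:: 1; 0; 1; 2; 3; 2; 0; 1; 0; 2; 0; 1; 0; 2; 3; 2; 1; 0; 1; 0; 1; 2; 3; 2; 1; 2; 1; 2; 3; 2; 1; 0]);
  ([:: 0; 0; 0; 1; 0; 0; 0; 1], [:: 2; 0; 1; 2; 1; 0; 2; 0; 1; 2; 3; 2; 1; 2; 1; 2; 3; 2; 1; 0]);
  ([:: 0; 0; 1; 0; 0; 0; 0; 1], [:: 0; 1; 2; 1; 2; 3; 2; 1; 0; 2; 0; 1; 2; 3; 2; 1; 3; 2; 1; 2; 1; 2; 3; 2; 1; 0]);
  ([:: h; mh; mh; mh; h; h; h; mh], [:: 2; 1; 0; 1; 2; 3; 1; 0; 1; 0; 2; 0; 1; 0; 1; 3; 2; 1; 0; 1; 2; 3; 1; 3; 0; 1; 2; 1; 0; 3; 1; 3]);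
  ([:: h; mh; mh; h; mh; h; h; mh], [:: 3; 0; 1; 3; 1; 2; 3; 0; 2; 0; 3; 2; 1; 3; 1; 0; 1; 3; 0; 1; 2; 1; 0; 3; 1; 3]);
  ([:: h; mh; mh; h; h; mh; h; mh], [:: 0; 1; 2; 3; 1; 0; 1; 0; 2; 0; 1; 0; 1; 3; 2; 1; 0; 3; 1; 3; 0; 1; 2; 1; 0; 3; 1; 3]);
  ([:: h; mh; mh; h; h; h; mh; mh], [:: 3; 0; 1; 2; 3; 1; 0; 1; 0; 2; 0; 1; 0; 1; 3; 2; 1; 0; 1; 3; 0; 1; 2; 1; 0; 3; 1; 3]);
  ([:: h; mh; h; mh; mh; h; h; mh], [:: 0; 1; 2; 3; 0; 2; 0; 3; 2; 1; 0; 3; 1; 3; 0; 1; 2; 1; 0; 3; 1; 3]);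
  ([:: h; mh; h; mh; h; mh; h; mh], [:: 3; 1; 2; 1; 3; 0; 1; 2; 1; 0; 3; 1; 2; 3; 0; 1; 2; 1; 0; 3; 1; 3]);
  ([:: h; mh; h; mh; h; h; mh; mh], [:: 1; 0; 1; 2; 3; 0; 2; 0; 3; 2; 1; 0; 1; 3; 1; 3; 0; 1; 2; 1; 0; 3; 1; 3]);
  ([:: h; mh; h; h; mh; mh; h; mh], [:: 1; 2; 1; 0; 1; 2; 3; 0; 2; 0; 3; 2; 1; 0; 1; 2; 1; 3; 1; 3; 0; 1; 2; 1; 0; 3; 1; 3]);
  ([:: h; mh; h; h; mh; h; mh; mh], [:: 3; 1; 3; 2; 0; 1; 2; 3; 0; 2; 0; 3; 2; 1; 0; 2; 0; 1; 2; 1; 0; 3; 1; 3]);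
  ([:: h; mh; h; h; h; mh; mh; mh], [:: 3; 2; 3; 2; 0; 1; 2; 1; 0; 2; 3; 2; 1; 3; 0; 1; 2; 1; 0; 3; 1; 3]);
  ([:: h; mh; mh; h; h; h; h; h], [:: 3; 0; 1; 2; 3; 1; 0; 1; 0; 2; 0; 1; 0; 1; 3; 2; 1; 0; 3; 0; 1; 2; 3; 2; 0; 1; 0; 2; 0; 1; 0; 2; 3; 2; 1; 0]);
  ([:: h; mh; h; mh; h; h; h; h], [:: 1; 0; 1; 2; 3; 0; 2; 0; 3; 2; 1; 0; 1; 0; 1; 2; 3; 2; 0; 1; 0; 2; 0; 1; 0; 2; 3; 2; 1; 0]);
  ([:: h; mh; h; h; mh; h; h; h], [:: 3; 1; 3; 2; 0; 1; 2; 3; 0; 2; 0; 3; 2; 1; 0; 2; 3; 1; 3; 0; 1; 2; 3; 2; 0; 1; 0; 2; 0; 1; 0; 2; 3; 2; 1; 0]);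
  ([:: h; mh; h; h; h; mh; h; h], [:: 3; 2; 3; 2; 0; 1; 2; 1; 0; 2; 3; 2; 3; 0; 1; 2; 3; 2; 0; 1; 0; 2; 0; 1; 0; 2; 3; 2; 1; 0]);
  ([:: h; mh; h; h; h; h; mh; h], [:: 3; 2; 3; 2; 0; 1; 2; 1; 0; 2; 3; 2; 3; 1; 0; 1; 2; 1; 0; 1])].

Definition T2 : seq (seq rat * seq nat) := [::
  ([:: -1; 1; 0; 0; 0; 0; 0; 0], [::]);
  ([:: mh; h; h; h; h; h; mh; h], [:: 1; 3; 0; 1; 2; 3; 0; 2; 0; 3; 2; 1; 0; 3; 1]);
  ([:: mh; h; h; h; h; mh; h; h], [:: 3; 1; 3; 2; 1; 3; 0; 1; 2; 1; 0; 3; 1; 2; 3; 1; 3]);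
  ([:: mh; h; h; h; h; mh; mh; mh], [:: 2; 1; 3; 0; 1; 2; 1; 0; 3; 1; 2]);
  ([:: mh; h; h; h; mh; h; h; h], [:: 3; 0; 1; 2; 3; 0; 2; 0; 3; 2; 1; 0; 3]);
  ([:: mh; h; h; h; mh; h; mh; mh], [:: 2; 3; 1; 0; 1; 2; 1; 0; 1; 3; 2]);
  ([:: mh; h; h; h; mh; mh; h; mh], [:: 1; 2; 1; 3; 0; 1; 2; 1; 0; 3; 1; 2; 1]);
  ([:: mh; h; h; mh; h; h; h; h], [:: 2; 1; 3; 1; 3; 2; 1; 3; 0; 1; 2; 1; 0; 3; 1; 2; 3; 1; 3; 1; 2]);
  ([:: mh; h; h; mh; h; h; mh; mh], [:: 1; 2; 1; 2; 1; 3; 0; 1; 2; 1; 0; 3; 1; 2; 1; 2; 1]);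
  ([:: mh; h; h; mh; h; mh; h; mh], [:: 3; 1; 3; 1; 3; 0; 1; 2; 1; 0; 3; 1; 3; 1; 3]);
  ([:: mh; h; h; mh; mh; h; h; mh], [:: 3; 0; 1; 2; 1; 0; 3]);
  ([:: mh; h; mh; h; h; h; h; h], [:: 3; 1; 3; 2; 1; 2; 3; 0; 2; 0; 3; 2; 1; 2; 3; 1; 3]);
  ([:: mh; h; mh; h; h; h; mh; mh], [:: 2; 1; 2; 3; 0; 2; 0; 3; 2; 1; 2]);
  ([:: mh; h; mh; h; h; mh; h; mh], [:: 0; 1; 3; 0; 1; 2; 1; 0; 3; 1; 0]);
  ([:: mh; h; mh; h; mh; h; h; mh], [:: 3; 0; 2; 0; 3]);
  ([:: mh; h; mh; mh; h; h; h; mh], [:: 3; 1; 3; 1; 2; 3; 0; 2; 0; 3; 2; 1; 3; 1; 3]);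
  ([:: 0; 0; 1; 1; 0; 0; 0; 0], [:: 1; 2; 1; 3; 0; 1; 2; 1; 0; 3; 1; 2; 3; 0; 1; 2; 3; 0; 2; 0; 3; 2; 1; 0; 3; 1]);
  ([:: 0; 0; 1; 0; 1; 0; 0; 0], [:: 3; 1; 3; 1; 3; 0; 1; 2; 1; 0; 3; 1; 3; 1; 3; 1; 3; 0; 1; 2; 3; 0; 2; 0; 3; 2; 1; 0; 3; 1]);
  ([:: 0; 0; 1; 0; 0; 1; 0; 0], [:: 3; 0; 1; 2; 1; 0; 3; 1; 3; 0; 1; 2; 3; 0; 2; 0; 3; 2; 1; 0; 3; 1]);
  ([:: 0; 0; 0; 1; 1; 0; 0; 0], [:: 0; 1; 3; 0; 1; 2; 1; 0; 3; 1; 0; 1; 3; 0; 1; 2; 3; 0; 2; 0; 3; 2; 1; 0; 3; 1]);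
  ([:: 0; 0; 0; 1; 0; 1; 0; 0], [:: 3; 0; 2; 0; 3; 1; 3; 0; 1; 2; 3; 0; 2; 0; 3; 2; 1; 0; 3; 1]);
  ([:: 0; 0; 0; 0; 1; 1; 0; 0], [:: 3; 1; 3; 1; 2; 3; 0; 2; 0; 3; 2; 1; 3; 1; 3; 1; 3; 0; 1; 2; 3; 0; 2; 0; 3; 2; 1; 0; 3; 1]);
  ([:: 0; 0; 1; 0; 0; 0; 1; 0], [:: 3; 0; 1; 2; 1; 0; 1; 3; 2; 1; 3; 0; 1; 2; 1; 0; 3; 1; 2; 3; 1; 3]);
  ([:: 0; 0; 0; 1; 0; 0; 1; 0], [:: 3; 0; 2; 0; 1; 3; 2; 1; 3; 0; 1; 2; 1; 0; 3; 1; 2; 3; 1; 3]);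
  ([:: 0; 0; 0; 0; 1; 0; 1; 0], [:: 3; 1; 3; 1; 2; 3; 0; 2; 0; 3; 2; 1; 2; 1; 3; 0; 1; 2; 1; 0; 3; 1; 2; 3; 1; 3]);
  ([:: 0; 0; 1; 0; 0; 0; 0; -1], [:: 3; 0; 1; 2; 1; 0; 3; 2; 1; 3; 0; 1; 2; 1; 0; 3; 1; 2]);
  ([:: 0; 0; 0; 1; 0; 0; 0; -1], [:: 3; 0; 2; 0; 3; 2; 1; 3; 0; 1; 2; 1; 0; 3; 1; 2]);
  ([:: 0; 0; 0; 0; 1; 0; 0; -1], [:: 3; 1; 3; 1; 2; 3; 0; 2; 0; 3; 2; 1; 3; 1; 3; 2; 1; 3; 0; 1; 2; 1; 0; 3; 1; 2]);
  ([:: 0; 0; 0; 0; 0; 1; 1; 0], [:: 3; 1; 3; 1; 2; 3; 0; 2; 0; 3; 2; 1; 3; 1; 0; 1; 2; 3; 0; 2; 0; 3; 2; 1; 0; 3]);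
  ([:: 0; 0; 0; 0; 0; 1; 0; -1], [:: 3; 1; 3; 1; 2; 3; 0; 2; 0; 3; 2; 1; 3; 1; 3; 2; 3; 1; 0; 1; 2; 1; 0; 1; 3; 2]);
  ([:: 0; 0; 0; 0; 0; 0; 1; -1], [:: 3; 1; 3; 1; 2; 3; 0; 2; 0; 3; 2; 1; 3; 1; 3; 1; 2; 1; 3; 0; 1; 2; 1; 0; 3; 1; 2; 1]);
  ([:: h; mh; h; h; h; h; h; mh], [:: 3; 1; 3; 1; 2; 3; 0; 2; 0; 3; 2; 1; 3; 1; 3; 1; 2; 1; 3; 0; 1; 2; 1; 0; 3; 1; 2; 3; 0; 1; 2; 3; 0; 2; 0; 3; 2; 1; 0; 3; 1])].

Definition T3 : seq (seq rat * seq nat) := [::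
  ([:: 0; -1; 1; 0; 0; 0; 0; 0], [::]);
  ([:: 0; -1; 0; 0; 0; 0; 0; -1], [:: 3; 2; 0; 1; 2; 3; 0; 2; 0; 3; 2; 1; 0; 2; 3]);
  ([:: 0; -1; 0; 0; 0; 0; 1; 0], [:: 3; 2; 1; 0; 1; 2; 3; 0; 2; 0; 3; 2; 1; 0; 1; 2; 3]);
  ([:: 0; -1; 0; 0; 0; 1; 0; 0], [:: 1; 2; 3; 2; 0; 1; 2; 1; 0; 2; 3; 2; 1]);
  ([:: 0; -1; 0; 0; 1; 0; 0; 0], [:: 1; 3; 2; 1; 0; 1; 2; 3; 0; 2; 0; 3; 2; 1; 0; 1; 2; 3; 1]);
  ([:: 0; -1; 0; 1; 0; 0; 0; 0], [:: 3; 2; 0; 1; 2; 1; 0; 2; 3])].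

Definition T4 : seq (seq rat * seq nat) := [::
  ([:: 0; 0; -1; 1; 0; 0; 0; 0], [::]);
  ([:: 0; 0; -1; 0; 0; 0; 0; -1], [:: 3; 1; 3; 0; 2; 0; 3; 1; 3]);
  ([:: 0; 0; -1; 0; 0; 0; 1; 0], [:: 2; 3; 2; 1; 0; 2; 0; 1; 2; 3; 2]);
  ([:: 0; 0; -1; 0; 0; 1; 0; 0], [:: 1; 0; 2; 0; 1]);
  ([:: 0; 0; -1; 0; 1; 0; 0; 0], [:: 1; 2; 3; 2; 1; 0; 2; 0; 1; 2; 3; 2; 1])].

Definition T5 : seq (seq rat * seq nat) := [::
  ([:: 0; 0; 0; -1; 1; 0; 0; 0], [::]);
  ([:: 0; 0; 0; -1; 0; 0; 0; -1], [:: 2; 1; 3; 2; 1; 2; 3; 0; 2; 0; 3; 2; 1; 2; 3; 1; 2]);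
  ([:: 0; 0; 0; -1; 0; 0; 1; 0], [:: 3; 2; 3; 2; 1; 2; 3; 0; 2; 0; 3; 2; 1; 2; 3; 2; 3]);
  ([:: 0; 0; 0; -1; 0; 1; 0; 0], [:: 1; 3; 2; 1; 2; 1; 2; 3; 1])].

Definition T6 : seq (seq rat * seq nat) := [::
  ([:: 0; 0; 0; 0; -1; 1; 0; 0], [::]);
  ([:: 0; 0; 0; 0; -1; 0; 0; -1], [:: 3; 1; 3; 2; 1; 2; 1; 2; 3; 1; 3]);
  ([:: 0; 0; 0; 0; -1; 0; 1; 0], [:: 1; 2; 1; 2; 3; 2; 1; 0; 2; 0; 1; 2; 3; 2; 1; 2; 1])].

Definition T7 : seq (seq rat * seq nat) := [::
  ([:: 0; 0; 0; 0; 0; -1; 1; 0], [::]);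
  ([:: 0; 0; 0; 0; 0; -1; 0; -1], [:: 2; 3; 2; 1; 2; 3; 0; 2; 0; 3; 2; 1; 2; 3; 2])].

Definition tables : seq (seq (seq rat * seq nat)) := [:: T0; T1; T2; T3; T4; T5; T6; T7].

Definition chn (i : nat) : seq rat := nth [::] chainL i.
Definition tab (k : nat) := nth [::] tables k.

Definition chk_lvl (k : nat) : bool :=
  all (fun p => (wact p.2 (chn k) == p.1) &&
                all (fun i => wact p.2 (chn i) == chn i) (iota 0 k)) (tab k) &&
  all (fun z => all (fun i => dot z (chn i) == dot (chn k) (chn i)) (iota 0 k) ==>
                has (fun p => p.1 == z) (tab k)) roots240.

Definition vadd8 (s t : seq rat) : seq rat := mkseq (fun i => s`_i + t`_i) 8.
Definition vscale8 (c : rat) (s : seq rat) : seq rat := mkseq (fun i => c * s`_i) 8.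
Fixpoint lc (cs : seq rat) (vs : seq (seq rat)) : seq rat :=
  match cs, vs with
  | c :: cs', v :: vs' => vadd8 (vscale8 c v) (lc cs' vs')
  | _, _ => nseq 8 0
  end.

Definition big_check : bool :=
  all chk_lvl (iota 0 8) &&
  all (fun k => G8b (chn k) && (dot (chn k) (chn k) == 2%:R)) (iota 0 8) &&
  all (fun j => lc (nth [::] coefL j) chainL == ej j) (iota 0 8) &&
  all (fun g => all (fun j => gact g (gact g (ej j)) == ej j) (iota 0 8)) (iota 0 4).

Lemma big_check_ok : big_check.
Proof. vm_compute. reflexivity. Qed.

Lemma allP_iota (P : pred nat) n i : all P (iota 0 n) -> (i < n)%N -> P i.
Proof. move=> /allP H Hi; apply: H; by rewrite mem_iota. Qed.

Lemma gmx_sym g : (gmx g)^T = gmx g.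
Proof.
apply/matrixP => i j; case: g => [|[|[|g]]] /=; rewrite !mxE;
case: i => [[|[|[|[|[|[|[|[|//]]]]]]]] Hi];
case: j => [[|[|[|[|[|[|[|[|//]]]]]]]] Hj]; reflexivity.
Qed.

Lemma gmx_inv g : gmx g *m gmx g = 1%:M.
Proof.
have /andP [/andP [/andP [_ _] _] H] := big_check_ok.
apply: mx_eq_cols => j; rewrite -mulmxA !gmxE mul1mx; congr cv.
have key g' : (g' < 4)%N -> gact g' (gact g' (ej j)) = ej j.
  move=> Hg'; have Hj := allP_iota H Hg'.
  by apply/eqP; exact: (allP_iota Hj (ltn_ord j)).
by case: g => [|[|[|g]]]; [exact: (key 0%N) | exact: (key 1%N) | exact: (key 2%N) | exact: (key 3%N)].
Qed.

Lemma dyadic_sign n : dyadic ((-1 : rat) ^+ n).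
Proof.
elim: n => [|n IH]; first exact: (dyadic_int 1).
by rewrite exprS; apply: dyadicM => //; exact: (dyadic_int (-1)).
Qed.

Lemma gmx_dyadic g i j : dyadic (gmx g i j).
Proof.
case: g => [|[|[|g]]] /=; rewrite mxE; try exact: dyadic_nat.
apply: dyadicM; last exact: dyadic_sign.
by exists ((bit0 i == bit0 j) : nat)%:Z, 1%N; rewrite expr1 -pmulrn.
Qed.

Lemma gact_G8 g s : G8 s -> G8 (gact g s).
Proof.
case: g => [|[|[|g]]] /=; [exact: aX0_G8 | exact: aCX_G8 | exact: aCCX_G8 | exact: aK_G8].
Qed.

Lemma WE8_gmx g : WE8 (gmx g).
Proof.
apply: (@WE8_of _ (gact g)).
- exact: gmxE.
- exact: gmx_sym.
- exact: gmx_inv.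
- exact: gmx_dyadic.
- exact: gact_G8.
Qed.

Lemma Sigma0_gmx M : Sigma0 M -> exists g, (g < 4)%N /\ M = gmx g.
Proof.
by case=> [->|[->|[->|->]]]; [exists 0%N | exists 1%N | exists 2%N | exists 3%N].
Qed.

Lemma generated_WE8 M : generated Sigma0 M -> WE8 M.
Proof.
elim => [|N HN|A B _ HA _ HB|A _ HA].
- exact: WE8_1.
- by have [g [_ ->]] := Sigma0_gmx HN; exact: WE8_gmx.
- exact: WE8_mul.
- exact: WE8_inv.
Qed.

Lemma cv_addv s t : cv (vadd8 s t) = cv s + cv t.
Proof. by apply/colP => i; rewrite !mxE nth_mkseq. Qed.
Lemma cv_scalev c s : cv (vscale8 c s) = c *: cv s.
Proof. by apply/colP => i; rewrite !mxE nth_mkseq. Qed.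
Lemma cv_zero : cv (nseq 8 0) = 0.
Proof. by apply/colP => i; rewrite !mxE nth_nseq if_same. Qed.

Lemma fix_lc (M : mat8) cs vs : (forall v, v \in vs -> M *m cv v = cv v) ->
  M *m cv (lc cs vs) = cv (lc cs vs).
Proof.
elim: cs vs => [|c cs IH] vs H; first by rewrite /= cv_zero mulmx0.
case: vs H => [|v vs] H; first by rewrite /= cv_zero mulmx0.
change (lc (c :: cs) (v :: vs)) with (vadd8 (vscale8 c v) (lc cs vs)).
rewrite !cv_addv !cv_scalev mulmxDr -scalemxAr IH; last first.
  by move=> u Hu; apply: H; rewrite inE Hu orbT.
by rewrite H // mem_head.
Qed.

Lemma fixall_one (M : mat8) : (forall i, (i < 8)%N -> M *m cv (chn i) = cv (chn i)) -> M = 1%:M.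
Proof.
move=> H; have /andP [/andP [/andP [_ _] HB] _] := big_check_ok.
apply: mx_eq_cols => j; rewrite mul1mx.
move/eqP: (allP_iota HB (ltn_ord j)) => <-.
apply: fix_lc => v /(nthP [::]) [i Hi <-]; exact: H.
Qed.

Lemma unit_WE8 W : WE8 W -> W \in unitmx.
Proof. by case=> H _; have [] := mulmx1_unit H. Qed.

Lemma descent k : (k <= 8)%N -> forall M, WE8 M ->
  (forall i, (i < 8 - k)%N -> M *m cv (chn i) = cv (chn i)) -> generated Sigma0 M.
Proof.
elim: k => [|k IH] Hk M HM Hfix.
  by rewrite (fixall_one Hfix); exact: gen_one.
set l := (8 - k.+1)%N in Hfix.
have Hl : (l < 8)%N by rewrite /l; lia.
have Hl1 : (8 - k = l.+1)%N by rewrite /l; lia.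
have /andP [/andP [/andP [HL HC] _] _] := big_check_ok.
have /andP [HG8 H2] := allP_iota HC Hl.
have /andP [HT HR] := allP_iota HL Hl.
have [HMo [_ HML]] := HM; have HMo' := mulmx1C HMo.
have HGv : Gamma8 (M *m cv (chn l)).
  apply/HML; exists (cv (chn l)); split; last by [].
  apply/Gamma8_cv; exact: G8bP HG8.
have Hip : ip (M *m cv (chn l)) (M *m cv (chn l)) = 2%:R.
  rewrite (ip_orth _ _ HMo') ip_cv; exact/eqP.
have [z Hz Hzv] := root_lemma HGv Hip.
have Hcond : all (fun i => dot z (chn i) == dot (chn l) (chn i)) (iota 0 l).
  apply/allP => i; rewrite mem_iota add0n => /andP [_ Hi].
  have := ip_orth (cv (chn l)) (cv (chn i)) HMo'.
  rewrite (Hfix i Hi) Hzv !ip_cv => E; apply/eqP; exact: E.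
have := allP HR z Hz => /implyP /(_ Hcond) /hasP [[z' w] Hp Hz0].
have Hz' : z' = z := eqP Hz0.
subst z'.
have /andP [Hw0 Hwfix0] := allP HT _ Hp.
have Hw : wact w (chn l) = z := eqP Hw0.
have Hwfix : forall i, i \in iota 0 l -> wact w (chn i) == chn i := allP Hwfix0.
have HW := generated_WE8 (wmx_gen w).
have HWu := unit_WE8 HW.
have -> : M = wmx w *m (invmx (wmx w) *m M) by rewrite mulKVmx.
apply: gen_mul; first exact: wmx_gen.
apply: (IH (ltnW Hk)); first by apply: WE8_mul; [exact: WE8_inv | exact: HM].
rewrite Hl1 => i; rewrite ltnS leq_eqVlt => /orP [/eqP ->|Hi].
- by rewrite -mulmxA Hzv -Hw -wmxE mulKmx.
- have Hwi : wmx w *m cv (chn i) = cv (chn i).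
    by rewrite wmxE; congr cv; apply/eqP; apply: Hwfix; rewrite mem_iota add0n Hi.
  by rewrite -mulmxA (Hfix i Hi) -{1}Hwi mulKmx.
Qed.

Lemma WE8_generated M : WE8 M -> generated Sigma0 M.
Proof. move=> HM; apply: (@descent 8 (leqnn 8) M HM) => i; by rewrite subnn. Qed.

Definition mxl (rows : seq (seq rat)) : mat8 := \matrix_(i < 8, j < 8) (nth [::] rows i)`_j.
Definition actL (rows : seq (seq rat)) (s : seq rat) : seq rat :=
  mkseq (fun i => dot (nth [::] rows i) s) 8.

Lemma mxlE rows s : mxl rows *m cv s = cv (actL rows s).
Proof.
apply/colP => i; rewrite !mxE nth_mkseq // !big_ord_recr big_ord0 /= !mxE /= add0r.
by rewrite /dot.
Qed.

Definition QL : seq (seq (seq rat)) := [::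
  [:: [:: 2%:R; 1; 1; 0; 0; 0; 0; 0]; [:: 1; 0; 1; 0; 0; 0; 0; 0]; [:: 1; 1; 0; 0; 0; 0; 0; 0]; [:: 0; 0; 0; 0; 0; 0; 0; 0]; [:: 0; 0; 0; 0; 0; 0; 0; 0]; [:: 0; 0; 0; 0; 0; 0; 0; 0]; [:: 0; 0; 0; 0; 0; 0; 0; 0]; [:: 0; 0; 0; 0; 0; 0; 0; 0]];
  [:: [:: 0; 0; 0; 0; 2%:R; 1; 1; 0]; [:: 0; 0; 0; 0; 1; 0; 1; 0]; [:: 0; 0; 0; 0; 1; 1; 0; 0]; [:: 0; 0; 0; 0; 0; 0; 0; 0]; [:: 2%:R; 1; 1; 0; 0; 0; 0; 0]; [:: 1; 0; 1; 0; 0; 0; 0; 0]; [:: 1; 1; 0; 0; 0; 0; 0; 0]; [:: 0; 0; 0; 0; 0; 0; 0; 0]];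
  [:: [:: 2%:R; 1; 0; 0; 0; 0; 0; 0]; [:: 1; 0; 0; 0; 0; 0; 0; 0]; [:: 0; 0; 2%:R; 1; 0; 0; 0; 0]; [:: 0; 0; 1; 0; 0; 0; 0; 0]; [:: 0; 0; 0; 0; 2%:R; 1; 0; 0]; [:: 0; 0; 0; 0; 1; 0; 0; 0]; [:: 0; 0; 0; 0; 0; 0; 2%:R; 1]; [:: 0; 0; 0; 0; 0; 0; 1; 0]];
  [:: [:: 0; 0; 0; 0; 1; 0; 1; 0]; [:: 0; 0; 0; 0; 0; 0; 0; 0]; [:: 0; 0; 0; 0; 1; 0; 1; 0]; [:: 0; 0; 0; 0; 0; 0; 0; 0]; [:: 1; 0; 1; 0; 0; 0; 0; 0]; [:: 0; 0; 0; 0; 0; 0; 0; 0]; [:: 1; 0; 1; 0; 0; 0; 0; 0]; [:: 0; 0; 0; 0; 0; 0; 0; 0]]].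

Definition Qm (m : nat) : mat8 := mxl (nth [::] QL m).

Definition comm_check : bool :=
  all (fun m =>
    all (fun j => (j == m) ||
       all (fun i => gact j (actL (nth [::] QL m) (ej i)) ==
                     actL (nth [::] QL m) (gact j (ej i))) (iota 0 8)) (iota 0 4) &&
    ~~ all (fun i => gact m (actL (nth [::] QL m) (ej i)) ==
                     actL (nth [::] QL m) (gact m (ej i))) (iota 0 8)) (iota 0 4).

Lemma comm_check_ok : comm_check.
Proof. vm_compute. reflexivity. Qed.

Lemma commute_gen m j : (m < 4)%N -> (j < 4)%N -> j != m -> gmx j *m Qm m = Qm m *m gmx j.
Proof.
move=> Hm Hj Hjm; have /andP [H _] := allP_iota comm_check_ok Hm.
have := allP_iota H Hj; rewrite (negbTE Hjm) orFb => Hall.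
apply: mx_eq_cols => i; rewrite -!mulmxA mxlE !gmxE mxlE; congr cv.
by apply/eqP; exact: (allP_iota Hall (ltn_ord i)).
Qed.

Lemma size_gact g s : size (gact g s) = 8%N.
Proof. by case: g => [|[|[|g]]]. Qed.

Lemma cv_inj s t : size s = 8%N -> size t = 8%N -> cv s = cv t -> s = t.
Proof.
move=> Hs Ht H; apply: (@eq_from_nth _ 0); rewrite ?Hs ?Ht // => i Hi.
by have := congr1 (fun v : 'cV_8 => v (Ordinal Hi) 0) H; rewrite !mxE.
Qed.

Lemma noncommute m : (m < 4)%N -> gmx m *m Qm m <> Qm m *m gmx m.
Proof.
move=> Hm E; have /andP [_ /negP H] := allP_iota comm_check_ok Hm.
apply: H; apply/allP => i; rewrite mem_iota add0n => /andP [_ Hi].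
apply/eqP; apply: cv_inj; rewrite ?size_gact ?size_mkseq //.
have := congr1 (fun A => A *m cv (ej i)) E; rewrite /= -!mulmxA mxlE !gmxE mxlE.
by [].
Qed.

Lemma gen_comm (S : mat8 -> Prop) (Q : mat8) :
  (forall M, S M -> M *m Q = Q *m M) -> forall M, generated S M -> M *m Q = Q *m M.
Proof.
move=> HS M; elim => [|N HN|A B _ HA _ HB|A _ HA].
- by rewrite mul1mx mulmx1.
- exact: HS.
- by rewrite -mulmxA HB mulmxA HA mulmxA.
- case: (boolP (A \in unitmx)) => Hu; last by rewrite invmx_out.
  rewrite -[invmx A *m Q]mulmx1 -(mulmxV Hu) !mulmxA -(mulmxA _ Q A) -HA.
  by rewrite !mulmxA mulVmx // mul1mx.
Qed.

Theorem theorem2 :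
  generates Sigma0 /\
  (forall S : 'M[rat]_8 -> Prop,
     (forall M, S M -> Sigma0 M) -> (exists M, Sigma0 M /\ ~ S M) ->
     ~ generates S).
Proof.
split.
  by move=> M; split; [exact: generated_WE8 | exact: WE8_generated].
move=> S HS [M0 [H0 HnS]] Hgen.
have [m [Hm4 HM0]] := Sigma0_gmx H0; subst M0.
have Hg := (Hgen (gmx m)).2 (WE8_gmx m).
apply: (noncommute Hm4); apply: (gen_comm _ Hg) => M HM.
have [j [Hj4 HMj]] := Sigma0_gmx (HS M HM); subst M.
apply: commute_gen => //.
by apply/eqP => Hjm; subst j.
Qed.
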